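(* Let a locally compact group $G$ act continuously on a locally compact Hausdorff space $X$, and let $\alpha$ be the associated action on $C_0(X)$, $\alpha_s(f)(x)=f(s^{-1}\cdot x)$. Then $\alpha$ is slice proper if and only if for every $x\in X$ and every compact $K\subset X$ the set $\{s\in G:s\cdot x\in K\}$ is compact in $G$ (i.e., for each $x$ the orbit map $s\mapsto s\cdot x$ is proper).
   Context: For an action $\alpha$ of $G$ on a $C^*$-algebra $B$, let $\widetilde\alpha:B\to M(B\otimes C_0(G))$ be the homomorphism with $\widetilde\alpha(b)(s)=\alpha_{s}(b)$ viewed as a bounded strictly continuous $B$-valued function (for $B=C_0(X)$: $\widetilde\alpha(f)(x,s)=f(s\cdot x)$). The action is slice proper if $(\omega\otimes\mathrm{id})(\widetilde\alpha(b))\in C_0(G)$ for all $\omega\in B^*$ and $b\in B$; here $(\omega\otimes\mathrm{id})(\widetilde\alpha(b))$ is the function $s\mapsto\omega(\widetilde\alpha(b)(s))$, a priori in $C_b(G)$. *)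

(* Defs.v *)
From Stdlib Require Import Reals List.
Open Scope R_scope.

Definition C : Type := (R * R)%type.
Definition C0c : C := (0, 0).
Definition Cadd (z w : C) : C := (fst z + fst w, snd z + snd w).
Definition Copp (z : C) : C := (- fst z, - snd z).
Definition Cmul (z w : C) : C :=
  (fst z * fst w - snd z * snd w, fst z * snd w + snd z * fst w).
Definition Cnorm (z : C) : R := sqrt (fst z * fst z + snd z * snd z).

Record TopSpace := {
  pt :> Type;
  open : (pt -> Prop) -> Prop;
  open_full : open (fun _ => True);
  open_inter : forall U V, open U -> open V -> open (fun x => U x /\ V x);
  open_union : forall F : (pt -> Prop) -> Prop,
      (forall U, F U -> open U) -> open (fun x => exists U, F U /\ U x)
}.
Arguments open {t} _.

Definition tcompact {X : TopSpace} (K : X -> Prop) : Prop :=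
  forall (I : Type) (U : I -> X -> Prop),
    (forall i, open (U i)) ->
    (forall x, K x -> exists i, U i x) ->
    exists l : list I, forall x, K x -> exists i, In i l /\ U i x.

Definition hausdorff (X : TopSpace) : Prop :=
  forall x y : X, x <> y ->
    exists U V, open U /\ open V /\ U x /\ V y /\ forall z, ~ (U z /\ V z).

Definition locally_compact (X : TopSpace) : Prop :=
  forall x : X, exists (U K : X -> Prop),
    open U /\ U x /\ (forall y, U y -> K y) /\ tcompact K.

Definition tcontinuous {X Y : TopSpace} (f : X -> Y) : Prop :=
  forall V, open V -> open (fun x => V (f x)).

Definition prod_open {X Y : TopSpace} (W : X -> Y -> Prop) : Prop :=
  forall x y, W x y ->
    exists U V, open U /\ open V /\ U x /\ V y /\
      forall x' y', U x' -> V y' -> W x' y'.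

Definition continuous2 {X Y Z : TopSpace} (f : X -> Y -> Z) : Prop :=
  forall W, open W -> prod_open (fun x y => W (f x y)).

Record TopGroup := {
  gsp :> TopSpace;
  gmul : gsp -> gsp -> gsp;
  ginv : gsp -> gsp;
  gone : gsp;
  gmulA : forall a b c, gmul a (gmul b c) = gmul (gmul a b) c;
  gmul1l : forall a, gmul gone a = a;
  gmulVl : forall a, gmul (ginv a) a = gone;
  gmul_cont : continuous2 gmul;
  ginv_cont : tcontinuous ginv
}.

Definition continuous_action (G : TopGroup) (X : TopSpace)
  (act : G -> X -> X) : Prop :=
  (forall x, act (gone G) x = x) /\
  (forall s t x, act (gmul G s t) x = act s (act t x)) /\
  continuous2 act.

Definition ccontinuous {X : TopSpace} (f : X -> C) : Prop :=
  forall (x : X) (eps : R), 0 < eps ->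
    exists U, open U /\ U x /\
      forall y, U y -> Cnorm (Cadd (f y) (Copp (f x))) < eps.

Definition vanishes_at_infinity {X : TopSpace} (f : X -> C) : Prop :=
  forall eps : R, 0 < eps ->
    exists K : X -> Prop, tcompact K /\ forall x, ~ K x -> Cnorm (f x) < eps.

Definition in_C0 {X : TopSpace} (f : X -> C) : Prop :=
  ccontinuous f /\ vanishes_at_infinity f.

(* omega is (the values on C_0(X) of) an element of the Banach dual C_0(X)^*:
   a complex-linear functional on C_0(X) bounded for the sup norm. *)
Definition in_C0_dual {X : TopSpace} (omega : (X -> C) -> C) : Prop :=
  (forall (a : C) (f g : X -> C), in_C0 f -> in_C0 g ->
     omega (fun x => Cadd (Cmul a (f x)) (g x)) =
     Cadd (Cmul a (omega f)) (omega g)) /\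
  (exists M : R, forall (f : X -> C) (c : R), in_C0 f ->
     (forall x, Cnorm (f x) <= c) -> Cnorm (omega f) <= M * c).

Definition alpha (G : TopGroup) (X : TopSpace) (act : G -> X -> X)
  (s : G) (f : X -> C) : X -> C :=
  fun x => f (act (ginv G s) x).

Definition slice_proper (G : TopGroup) (X : TopSpace)
  (act : G -> X -> X) : Prop :=
  forall (omega : (X -> C) -> C) (f : X -> C),
    in_C0_dual omega -> in_C0 f ->
    in_C0 (fun s : G => omega (alpha G X act s f)).

(* Main.v *)
Require Import Defs.
From Stdlib Require Import Reals List Lra Lia FunctionalExtensionality PropExtensionality ClassicalEpsilon Classical Arith ZArith.
Require Import Defs.
Open Scope R_scope.

Module PA.

Section Topo.
Variable X : TopSpace.

Lemma pred_ext (A B : X -> Prop) : (forall x, A x <-> B x) -> A = B.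
Proof. intros H; apply functional_extensionality; intros x; apply propositional_extensionality; auto. Qed.

Lemma open_ext (A B : X -> Prop) : (forall x, A x <-> B x) -> open A -> open B.
Proof. intros H HA; rewrite <- (pred_ext A B H); exact HA. Qed.

Lemma open_local (A : X -> Prop) :
  (forall x, A x -> exists U, open U /\ U x /\ forall y, U y -> A y) -> open A.
Proof.
  intros H.
  apply (open_ext (fun x => exists U, (open U /\ forall y, U y -> A y) /\ U x)).
  - intros x; split.
    + intros [U [[_ HU] Ux]]; auto.
    + intros Ax; destruct (H x Ax) as [U [oU [Ux HU]]]; exists U; auto.
  - apply open_union; intros U [h _]; exact h.
Qed.

Lemma open_empty : open (fun _ : X => False).
Proof. apply open_local; intros x []. Qed.

Lemma open_finter {I : Type} (U : I -> X -> Prop) (l : list I) :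
  (forall i, open (U i)) -> open (fun z => forall i, In i l -> U i z).
Proof.
  intros HU; induction l as [|a l IH].
  - apply (open_ext (fun _ => True)); [|apply open_full].
    intros x; split; [intros _ i []| auto].
  - apply (open_ext (fun z => U a z /\ forall i, In i l -> U i z)).
    + intros z; split.
      * intros [h1 h2] i [<-|Hi]; auto.
      * intros h; split; [apply h; left; auto| intros i Hi; apply h; right; auto].
    + apply open_inter; auto.
Qed.

Lemma open_funion {I : Type} (U : I -> X -> Prop) (l : list I) :
  (forall i, open (U i)) -> open (fun z => exists i, In i l /\ U i z).
Proof.
  intros HU; apply open_local; intros x [i [Hi Ux]].
  exists (U i); repeat split; auto. intros y Uy; eauto.
Qed.

Lemma compact_empty : tcompact (fun _ : X => False).
Proof. intros I U _ _; exists nil; intros x []. Qed.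

Lemma compact_union (A B : X -> Prop) :
  tcompact A -> tcompact B -> tcompact (fun x => A x \/ B x).
Proof.
  intros HA HB I U oU cov.
  destruct (HA I U oU) as [l1 H1]; [intros x Ax; apply cov; auto|].
  destruct (HB I U oU) as [l2 H2]; [intros x Bx; apply cov; auto|].
  exists (l1 ++ l2); intros x [Ax|Bx].
  - destruct (H1 x Ax) as [i [Hi Ui]]; exists i; split; auto; apply in_or_app; auto.
  - destruct (H2 x Bx) as [i [Hi Ui]]; exists i; split; auto; apply in_or_app; auto.
Qed.

Lemma compact_ext (A B : X -> Prop) : (forall x, A x <-> B x) -> tcompact A -> tcompact B.
Proof. intros H HA; rewrite <- (pred_ext A B H); exact HA. Qed.

Lemma compact_funion {I : Type} (C : I -> X -> Prop) (l : list I) :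
  (forall i, In i l -> tcompact (C i)) -> tcompact (fun z => exists i, In i l /\ C i z).
Proof.
  induction l as [|a l IH]; intros H.
  - apply (compact_ext (fun _ => False)); [|apply compact_empty].
    intros x; split; [intros []|intros [i [[] _]]].
  - apply (compact_ext (fun z => C a z \/ exists i, In i l /\ C i z)).
    + intros z; split.
      * intros [h|[i [Hi h]]]; [exists a; split; [left|]; auto| exists i; split; [right|]; auto].
      * intros [i [[<-|Hi] h]]; [left; auto| right; eauto].
    + apply compact_union; [apply H; left; auto| apply IH; intros i Hi; apply H; right; auto].
Qed.

Lemma compact_closed_sub (K C : X -> Prop) :
  tcompact K -> open (fun x => ~ C x) -> (forall x, C x -> K x) -> tcompact C.
Proof.
  intros HK oC sub I U oU cov.
  destruct (HK (option I) (fun o => match o with Some i => U i | None => fun x => ~ C x end))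
    as [l Hl].
  - intros [i|]; auto.
  - intros x Kx. destruct (classic (C x)) as [Cx|nCx].
    + destruct (cov x Cx) as [i Ui]; exists (Some i); auto.
    + exists None; auto.
  - exists (flat_map (fun o => match o with Some i => i :: nil | None => nil end) l).
    intros x Cx. destruct (Hl x (sub x Cx)) as [[i|] [Hi Ui]].
    + exists i; split; auto. apply in_flat_map. exists (Some i); split; auto. left; auto.
    + contradiction.
Qed.

End Topo.

Arguments open_ext {X}.
Arguments open_local {X}.
Arguments open_empty {X}.
Arguments open_finter {X I}.
Arguments open_funion {X I}.
Arguments compact_empty {X}.
Arguments compact_union {X}.
Arguments compact_ext {X}.
Arguments compact_funion {X I}.
Arguments compact_closed_sub {X}.
Arguments pred_ext {X}.

Lemma compact_image {X Y : TopSpace} (f : X -> Y) (K : X -> Prop) (D : Y -> Prop) :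
  tcontinuous f -> tcompact K -> (forall x, K x -> D (f x)) ->
  (forall y, D y -> exists x, K x /\ f x = y) -> tcompact D.
Proof.
  intros cf HK KD HD I U oU cov.
  destruct (HK I (fun i x => U i (f x))) as [l Hl].
  - intros i; apply cf; auto.
  - intros x Kx. apply cov; auto.
  - exists l; intros y Dy. destruct (HD y Dy) as [x [Kx <-]]. auto.
Qed.

Lemma cont_const {X Y : TopSpace} (c : Y) : tcontinuous (fun _ : X => c).
Proof.
  intros V oV. destruct (classic (V c)) as [h|h].
  - apply (open_ext (fun _ => True)); [intros; tauto| apply open_full].
  - apply (open_ext (fun _ => False)); [intros; tauto| apply open_empty].
Qed.

Lemma cont_id {X : TopSpace} : tcontinuous (fun x : X => x).
Proof. intros V oV; exact oV. Qed.

Lemma cont_comp {X Y Z : TopSpace} (f : X -> Y) (g : Y -> Z) :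
  tcontinuous f -> tcontinuous g -> tcontinuous (fun x => g (f x)).
Proof. intros cf cg V oV. apply (cf (fun y => V (g y))). apply cg; auto. Qed.

Lemma cont2_comp {X Y Z W : TopSpace} (h : X -> Y -> Z) (u : W -> X) (v : W -> Y) :
  continuous2 h -> tcontinuous u -> tcontinuous v -> tcontinuous (fun w => h (u w) (v w)).
Proof.
  intros ch cu cv V oV. apply open_local. intros w Hw.
  destruct (ch V oV (u w) (v w) Hw) as [A [B [oA [oB [Aw [Bw HAB]]]]]].
  exists (fun w' => A (u w') /\ B (v w')). repeat split; auto.
  - apply open_inter; [apply cu|apply cv]; auto.
  - intros y [h1 h2]; auto.
Qed.

Section Haus.
Variable X : TopSpace.
Hypothesis HX : hausdorff X.

Lemma sep_point_compact (D : X -> Prop) (x : X) : tcompact D -> ~ D x ->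
  exists A B, open A /\ open B /\ A x /\ (forall y, D y -> B y) /\ forall z, ~ (A z /\ B z).
Proof.
  intros HD nDx.
  assert (Hsep : forall k : {k | D k}, exists AB : (X -> Prop) * (X -> Prop),
     open (fst AB) /\ open (snd AB) /\ fst AB x /\ snd AB (proj1_sig k) /\
     forall z, ~ (fst AB z /\ snd AB z)).
  { intros [k Dk]. simpl. assert (x <> k) by (intros ->; contradiction).
    destruct (HX x k H) as [A [B h]]. exists (A, B); simpl; tauto. }
  destruct (choice _ Hsep) as [g Hg].
  destruct (HD {k | D k} (fun k => snd (g k))) as [l Hl].
  - intros k; apply Hg.
  - intros y Dy. exists (exist _ y Dy). apply Hg.
  - exists (fun z => forall k, In k l -> fst (g k) z).
    exists (fun z => exists k, In k l /\ snd (g k) z).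
    repeat split.
    + apply open_finter; intros k; apply Hg.
    + apply open_funion; intros k; apply Hg.
    + intros k _; apply Hg.
    + intros y Dy; apply Hl; auto.
    + intros z [h1 [k [Hk h2]]]. apply (proj2 (proj2 (proj2 (proj2 (Hg k)))) z); auto.
Qed.

Lemma compact_closed (D : X -> Prop) : tcompact D -> open (fun x => ~ D x).
Proof.
  intros HD. apply open_local. intros x nDx.
  destruct (sep_point_compact D x HD nDx) as [A [B [oA [oB [Ax [DB dis]]]]]].
  exists A; repeat split; auto. intros y Ay Dy. apply (dis y); auto.
Qed.

End Haus.
Arguments sep_point_compact {X}.
Arguments compact_closed {X}.

End PA.
Import PA.

Module PB.

Section Grp.
Variable G : TopGroup.
Notation "a * b" := (gmul G a b).
Notation e := (gone G).
Notation inv := (ginv G).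

Lemma gmulVr a : a * inv a = e.
Proof.
  rewrite <- (gmul1l G (a * inv a)).
  rewrite <- (gmulVl G (inv a)) at 1.
  rewrite <- gmulA. rewrite (gmulA G (inv a) a (inv a)). rewrite gmulVl, gmul1l.
  apply gmulVl.
Qed.

Lemma gmul1r a : a * e = a.
Proof. rewrite <- (gmulVl G a), gmulA, gmulVr, gmul1l; auto. Qed.

Lemma ginvK a : inv (inv a) = a.
Proof.
  rewrite <- (gmul1r (inv (inv a))), <- (gmulVl G a), gmulA, gmulVl, gmul1l; auto.
Qed.

Lemma ginv1 : inv e = e.
Proof. rewrite <- (gmul1r (inv e)); apply gmulVl. Qed.

Lemma ginv_mul a b : inv (a * b) = inv b * inv a.
Proof.
  assert (H : (inv b * inv a) * (a * b) = e).
  { rewrite gmulA, <- (gmulA G (inv b) (inv a) a), gmulVl, gmul1r, gmulVl; auto. }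
  rewrite <- (gmul1r (inv (a*b))), <- (gmulVr (a*b)) at 1.
  rewrite gmulA. rewrite <- (gmul1l G (inv (a*b) * (a*b))) , gmulVl, gmul1r.
  rewrite <- H, <- gmulA, gmulVr, gmul1r; auto.
Qed.

Lemma cont_ginv : tcontinuous (ginv G).
Proof. exact (ginv_cont G). Qed.

Lemma cont_lmul (a : G) : tcontinuous (fun s : G => a * s).
Proof. apply (cont2_comp (gmul G) (fun _ => a) (fun s => s)); [apply gmul_cont|apply cont_const|apply cont_id]. Qed.
End Grp.
Arguments gmulVr {G}. Arguments gmul1r {G}. Arguments ginvK {G}. Arguments ginv1 {G}.
Arguments ginv_mul {G}.

Section RC.
Variable X : TopSpace.

Definition rc (phi : X -> R) (x : X) := forall eps, 0 < eps ->
  exists U, open U /\ U x /\ forall y, U y -> Rabs (phi y - phi x) < eps.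
Definition rcont (phi : X -> R) := forall x, rc phi x.

Lemma rc_comp2 (h : R -> R -> R) (u v : X -> R) x : rc u x -> rc v x ->
  (forall eps, 0 < eps -> exists d, 0 < d /\ forall a b, Rabs (a - u x) < d -> Rabs (b - v x) < d ->
      Rabs (h a b - h (u x) (v x)) < eps) ->
  rc (fun y => h (u y) (v y)) x.
Proof.
  intros cu cv ch eps Heps. destruct (ch eps Heps) as [d [Hd Hh]].
  destruct (cu d Hd) as [U [oU [Ux HU]]]. destruct (cv d Hd) as [V [oV [Vx HV]]].
  exists (fun y => U y /\ V y); repeat split; auto.
  - apply open_inter; auto.
  - intros y [h1 h2]; apply Hh; auto.
Qed.

Lemma rc_const c x : rc (fun _ => c) x.
Proof. intros eps He; exists (fun _ => True); repeat split; [apply open_full| intros; rewrite Rminus_diag, Rabs_R0; auto]. Qed.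

Lemma rc_ext (phi psi : X -> R) x : (forall y, phi y = psi y) -> rc psi x -> rc phi x.
Proof. intros H h eps He; destruct (h eps He) as [U [oU [Ux HU]]]; exists U; repeat split; auto; intros y Uy; rewrite !H; auto. Qed.

Lemma rc_plus u v x : rc u x -> rc v x -> rc (fun y => u y + v y) x.
Proof.
  intros cu cv. apply (rc_comp2 Rplus); auto. intros eps He; exists (eps/2); split; [lra|].
  intros a b Ha Hb. replace (a + b - (u x + v x)) with ((a - u x) + (b - v x)) by ring.
  eapply Rle_lt_trans; [apply Rabs_triang|lra].
Qed.

Lemma rc_opp u x : rc u x -> rc (fun y => - u y) x.
Proof.
  intros cu eps He; destruct (cu eps He) as [U [oU [Ux HU]]]; exists U; repeat split; auto.
  intros y Uy. replace (- u y - - u x) with (- (u y - u x)) by ring; rewrite Rabs_Ropp; auto.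
Qed.

Lemma rc_minus u v x : rc u x -> rc v x -> rc (fun y => u y - v y) x.
Proof. intros; apply rc_plus; auto; apply rc_opp; auto. Qed.

Lemma rc_mult u v x : rc u x -> rc v x -> rc (fun y => u y * v y) x.
Proof.
  intros cu cv. apply (rc_comp2 Rmult); auto. intros eps He.
  set (A := Rabs (u x)). set (B := Rabs (v x)).
  assert (HA : 0 <= A) by apply Rabs_pos. assert (HB : 0 <= B) by apply Rabs_pos.
  exists (Rmin 1 ((eps/2) / (A + B + 1))). split.
  { apply Rmin_pos; [lra| apply Rdiv_lt_0_compat; lra]. }
  intros a b Ha Hb.
  set (d := Rmin 1 ((eps/2) / (A + B + 1))) in *.
  assert (d1 : d <= 1) by apply Rmin_l.
  assert (d2 : d <= (eps/2) / (A + B + 1)) by apply Rmin_r.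
  assert (d3 : d * (A + B + 1) <= eps/2).
  { apply (Rmult_le_compat_r (A+B+1)) in d2; [|lra].
    unfold Rdiv in d2; rewrite Rmult_assoc, Rinv_l in d2; lra. }
  replace (a * b - u x * v x) with ((a - u x) * b + u x * (b - v x)) by ring.
  eapply Rle_lt_trans; [apply Rabs_triang|]. rewrite !Rabs_mult.
  assert (Hb' : Rabs b <= B + 1).
  { replace b with ((b - v x) + v x) by ring. eapply Rle_trans; [apply Rabs_triang|]. fold B; lra. }
  assert (0 <= Rabs (a - u x)) by apply Rabs_pos.
  assert (0 <= Rabs (b - v x)) by apply Rabs_pos.
  apply Rle_lt_trans with (d * (B + 1) + A * d).
  - apply Rplus_le_compat.
    + apply Rmult_le_compat; auto; try apply Rabs_pos; lra.
    + apply Rmult_le_compat_l; auto; lra.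
  - assert (0 < d) by (apply Rmin_pos; [lra| apply Rdiv_lt_0_compat; lra]).
    nra.
Qed.

Lemma rc_inv u x : rc u x -> 0 < u x -> rc (fun y => / u y) x.
Proof.
  intros cu pos. apply (rc_comp2 (fun a _ => / a) u u); auto. intros eps He.
  set (p := u x) in *.
  exists (Rmin (p/2) (eps * p * p / 2)). split.
  { apply Rmin_pos; [lra|]. apply Rdiv_lt_0_compat; [|lra]. apply Rmult_lt_0_compat; [|lra]. nra. }
  intros a _ Ha _.
  assert (h1 : Rabs (a - p) < p/2) by (eapply Rlt_le_trans; [apply Ha| apply Rmin_l]).
  assert (h2 : Rabs (a - p) < eps * p * p / 2) by (eapply Rlt_le_trans; [apply Ha| apply Rmin_r]).
  apply Rabs_def2 in h1. destruct h1 as [h1 h1'].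
  assert (apos : p / 2 < a) by lra.
  replace (/ a - / p) with ((p - a) / (a * p)) by (field; lra).
  unfold Rdiv; rewrite Rabs_mult, Rabs_inv, (Rabs_right (a * p)) by nra.
  rewrite <- Rabs_Ropp. replace (- (p - a)) with (a - p) by ring.
  apply Rmult_lt_reg_r with (a * p); [nra|].
  rewrite Rmult_assoc, Rinv_l by nra. rewrite Rmult_1_r.
  apply Rlt_le_trans with (eps * p * p / 2); auto.
  assert (a * p >= p * p / 2) by nra.
  assert (eps * (a * p) >= eps * (p * p / 2)) by (apply Rmult_ge_compat_l; lra). lra.
Qed.

Lemma rc_abs u x : rc u x -> rc (fun y => Rabs (u y)) x.
Proof.
  intros cu eps He; destruct (cu eps He) as [U [oU [Ux HU]]]; exists U; repeat split; auto.
  intros y Uy. eapply Rle_lt_trans; [apply Rabs_triang_inv2|]; auto.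
Qed.

Lemma rc_max u v x : rc u x -> rc v x -> rc (fun y => Rmax (u y) (v y)) x.
Proof.
  intros cu cv. apply rc_ext with (fun y => (u y + v y + Rabs (u y - v y)) / 2).
  - intros y. unfold Rmax. destruct (Rle_dec (u y) (v y)).
    + rewrite Rabs_left1 by lra; field.
    + rewrite Rabs_right by lra; field.
  - unfold Rdiv. apply rc_mult; [|apply rc_const]. apply rc_plus; [apply rc_plus; auto|].
    apply rc_abs, rc_minus; auto.
Qed.

Lemma rc_min u v x : rc u x -> rc v x -> rc (fun y => Rmin (u y) (v y)) x.
Proof.
  intros cu cv. apply rc_ext with (fun y => (u y + v y - Rabs (u y - v y)) / 2).
  - intros y. unfold Rmin. destruct (Rle_dec (u y) (v y)).
    + rewrite Rabs_left1 by lra; field.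
    + rewrite Rabs_right by lra; field.
  - unfold Rdiv. apply rc_mult; [|apply rc_const]. apply rc_minus; [apply rc_plus; auto|].
    apply rc_abs, rc_minus; auto.
Qed.

Lemma rc_local (phi psi : X -> R) (O : X -> Prop) x : open O -> O x ->
  (forall y, O y -> phi y = psi y) -> rc psi x -> rc phi x.
Proof.
  intros oO Ox H cp eps He. destruct (cp eps He) as [U [oU [Ux HU]]].
  exists (fun y => O y /\ U y); repeat split; auto.
  - apply open_inter; auto.
  - intros y [h1 h2]; rewrite !H; auto.
Qed.

Lemma open_lt (phi : X -> R) a : rcont phi -> open (fun x => phi x < a).
Proof.
  intros cp; apply open_local; intros x Hx.
  destruct (cp x (a - phi x)) as [U [oU [Ux HU]]]; [lra|].
  exists U; repeat split; auto. intros y Uy; specialize (HU y Uy).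
  apply Rabs_def2 in HU; lra.
Qed.

Lemma open_gt (phi : X -> R) a : rcont phi -> open (fun x => a < phi x).
Proof.
  intros cp; apply open_local; intros x Hx.
  destruct (cp x (phi x - a)) as [U [oU [Ux HU]]]; [lra|].
  exists U; repeat split; auto. intros y Uy; specialize (HU y Uy).
  apply Rabs_def2 in HU; lra.
Qed.
End RC.
Arguments rc {X}. Arguments rcont {X}.
Arguments rc_const {X}. Arguments rc_ext {X}. Arguments rc_plus {X}. Arguments rc_opp {X}.
Arguments rc_minus {X}. Arguments rc_mult {X}. Arguments rc_inv {X}. Arguments rc_abs {X}.
Arguments rc_max {X}. Arguments rc_min {X}. Arguments rc_local {X}. Arguments open_lt {X}.
Arguments open_gt {X}. Arguments rc_comp2 {X}.

Lemma rc_map {X Y : TopSpace} (m : X -> Y) (phi : Y -> R) z :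
  tcontinuous m -> rc phi (m z) -> rc (fun w => phi (m w)) z.
Proof.
  intros cm cp eps He; destruct (cp eps He) as [U [oU [Ux HU]]].
  exists (fun w => U (m w)); repeat split; auto.
Qed.

End PB.
Import PB.

Module PCx.

Lemma Cnorm_ge0 z : 0 <= Cnorm z.
Proof. apply sqrt_pos. Qed.

Lemma Cnorm_sq z : Cnorm z * Cnorm z = fst z * fst z + snd z * snd z.
Proof. unfold Cnorm; apply sqrt_sqrt; nra. Qed.

Lemma sq_le (a b : R) : 0 <= b -> a * a <= b * b -> a <= b.
Proof. intros. destruct (Rle_dec a b); auto. nra. Qed.

Lemma Cnorm_fst z : Rabs (fst z) <= Cnorm z.
Proof.
  apply sq_le; [apply Cnorm_ge0|]. rewrite Cnorm_sq, <- Rabs_mult, Rabs_right by nra. nra.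
Qed.

Lemma Cnorm_snd z : Rabs (snd z) <= Cnorm z.
Proof.
  apply sq_le; [apply Cnorm_ge0|]. rewrite Cnorm_sq, <- Rabs_mult, Rabs_right by nra. nra.
Qed.


Lemma Cnorm_le_sum z : Cnorm z <= Rabs (fst z) + Rabs (snd z).
Proof.
  apply sq_le. { pose proof (Rabs_pos (fst z)); pose proof (Rabs_pos (snd z)); lra. }
  rewrite Cnorm_sq. pose proof (Rabs_pos (fst z)); pose proof (Rabs_pos (snd z)).
  assert (Rabs (fst z) * Rabs (fst z) = fst z * fst z) by (rewrite <- Rabs_mult, Rabs_right by nra; auto).
  assert (Rabs (snd z) * Rabs (snd z) = snd z * snd z) by (rewrite <- Rabs_mult, Rabs_right by nra; auto).
  nra.
Qed.

Lemma Cnorm_real r : Cnorm (r, 0) = Rabs r.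
Proof.
  apply Rle_antisym.
  - eapply Rle_trans; [apply Cnorm_le_sum|]. simpl. rewrite Rabs_R0; lra.
  - apply (Cnorm_fst (r, 0)).
Qed.

Lemma Cnorm_mul a z : Cnorm (Cmul a z) = Cnorm a * Cnorm z.
Proof.
  unfold Cnorm. rewrite <- sqrt_mult by nra. f_equal. simpl. ring.
Qed.

Lemma Cnorm_opp z : Cnorm (Copp z) = Cnorm z.
Proof. unfold Cnorm; simpl; f_equal; ring. Qed.

Lemma Cnorm_triang z w : Cnorm (Cadd z w) <= Cnorm z + Cnorm w.
Proof.
  apply sq_le. { pose proof (Cnorm_ge0 z); pose proof (Cnorm_ge0 w); lra. }
  rewrite Cnorm_sq. simpl.
  assert (CS : fst z * fst w + snd z * snd w <= Cnorm z * Cnorm w).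
  { apply sq_le. { pose proof (Cnorm_ge0 z); pose proof (Cnorm_ge0 w); nra. }
    replace (Cnorm z * Cnorm w * (Cnorm z * Cnorm w)) with
      ((Cnorm z * Cnorm z) * (Cnorm w * Cnorm w)) by ring.
    rewrite !Cnorm_sq.
    pose proof (Rle_0_sqr (fst z * snd w - snd z * fst w)). unfold Rsqr in *. nra. }
  pose proof (Cnorm_sq z); pose proof (Cnorm_sq w). nra.
Qed.

Lemma Cnorm_eq0 z : Cnorm z <= 0 -> z = C0c.
Proof.
  intros h. pose proof (Cnorm_ge0 z). pose proof (Cnorm_fst z); pose proof (Cnorm_snd z).
  pose proof (Rabs_pos (fst z)); pose proof (Rabs_pos (snd z)).
  destruct z as [a b]; simpl in *. unfold C0c.
  assert (Rabs a = 0) by lra. assert (Rabs b = 0) by lra.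
  f_equal; [destruct (Req_dec a 0)| destruct (Req_dec b 0)]; auto;
  exfalso; [apply Rabs_no_R0 in H6| apply Rabs_no_R0 in H6]; auto.
Qed.

Definition Cdist (z w : C) := Cnorm (Cadd z (Copp w)).

Lemma Cdist_sym z w : Cdist z w = Cdist w z.
Proof. unfold Cdist, Cnorm; simpl; f_equal; ring. Qed.

Lemma Cdist_triang z w u : Cdist z w <= Cdist z u + Cdist u w.
Proof.
  unfold Cdist. replace (Cadd z (Copp w)) with (Cadd (Cadd z (Copp u)) (Cadd u (Copp w))).
  - apply Cnorm_triang.
  - unfold Cadd, Copp; simpl; f_equal; ring.
Qed.

Lemma Cdist_le z w : Cdist z w <= Cnorm z + Cnorm w.
Proof. unfold Cdist. rewrite <- (Cnorm_opp w). apply Cnorm_triang. Qed.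

Lemma Cnorm_dist z w : Rabs (Cnorm z - Cnorm w) <= Cdist z w.
Proof.
  assert (h1 : Cnorm z <= Cdist z w + Cnorm w).
  { replace z with (Cadd (Cadd z (Copp w)) w) at 1 by (destruct z, w; unfold Cadd, Copp; simpl; f_equal; ring).
    apply Cnorm_triang. }
  assert (h2 : Cnorm w <= Cdist z w + Cnorm z).
  { rewrite Cdist_sym. replace w with (Cadd (Cadd w (Copp z)) z) at 1 by (destruct z, w; unfold Cadd, Copp; simpl; f_equal; ring).
    apply Cnorm_triang. }
  apply Rabs_le; lra.
Qed.

Lemma Cdist_comp z w : Cdist z w <= Rabs (fst z - fst w) + Rabs (snd z - snd w).
Proof. unfold Cdist. eapply Rle_trans; [apply Cnorm_le_sum|]. simpl. unfold Rminus; lra. Qed.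

Lemma Cdist_fst z w : Rabs (fst z - fst w) <= Cdist z w.
Proof. apply (Cnorm_fst (Cadd z (Copp w))). Qed.
Lemma Cdist_snd z w : Rabs (snd z - snd w) <= Cdist z w.
Proof. apply (Cnorm_snd (Cadd z (Copp w))). Qed.

Lemma Cpair_eq (z w : C) : fst z = fst w -> snd z = snd w -> z = w.
Proof. destruct z, w; simpl; intros; subst; auto. Qed.

Section CC.
Variable X : TopSpace.
Definition cc (f : X -> C) x := forall eps, 0 < eps ->
  exists U, open U /\ U x /\ forall y, U y -> Cnorm (Cadd (f y) (Copp (f x))) < eps.

Lemma cc_all (f : X -> C) : ccontinuous f <-> forall x, cc f x.
Proof. split; intros h; exact h. Qed.

Lemma cc_fst f x : cc f x -> rc (fun y => fst (f y)) x.
Proof. intros h eps He; destruct (h eps He) as [U [oU [Ux HU]]]; exists U; repeat split; auto.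
  intros y Uy; eapply Rle_lt_trans; [apply (Cdist_fst (f y) (f x))|apply HU; auto]. Qed.
Lemma cc_snd f x : cc f x -> rc (fun y => snd (f y)) x.
Proof. intros h eps He; destruct (h eps He) as [U [oU [Ux HU]]]; exists U; repeat split; auto.
  intros y Uy; eapply Rle_lt_trans; [apply (Cdist_snd (f y) (f x))|apply HU; auto]. Qed.
Lemma cc_norm f x : cc f x -> rc (fun y => Cnorm (f y)) x.
Proof. intros h eps He; destruct (h eps He) as [U [oU [Ux HU]]]; exists U; repeat split; auto.
  intros y Uy; eapply Rle_lt_trans; [apply (Cnorm_dist (f y) (f x))|apply HU; auto]. Qed.

Lemma cc_of_rc f x : rc (fun y => fst (f y)) x -> rc (fun y => snd (f y)) x -> cc f x.
Proof.
  intros h1 h2 eps He.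
  destruct (h1 (eps/2)) as [U [oU [Ux HU]]]; [lra|].
  destruct (h2 (eps/2)) as [V [oV [Vx HV]]]; [lra|].
  exists (fun y => U y /\ V y); repeat split; auto; [apply open_inter; auto|].
  intros y [Uy Vy]. eapply Rle_lt_trans; [apply (Cdist_comp (f y) (f x))|].
  specialize (HU y Uy); specialize (HV y Vy); lra.
Qed.

Lemma cc_ext (f g : X -> C) x : (forall y, f y = g y) -> cc g x -> cc f x.
Proof. intros H h eps He; destruct (h eps He) as [U [oU [Ux HU]]]; exists U; repeat split; auto.
  intros y Uy; rewrite !H; auto. Qed.
End CC.
Arguments cc {X}. Arguments cc_fst {X}. Arguments cc_snd {X}. Arguments cc_norm {X}.
Arguments cc_of_rc {X}. Arguments cc_ext {X}.

Lemma cc_map {X Y : TopSpace} (m : X -> Y) (f : Y -> C) z :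
  tcontinuous m -> cc f (m z) -> cc (fun w => f (m w)) z.
Proof.
  intros cm cp eps He; destruct (cp eps He) as [U [oU [Ux HU]]].
  exists (fun w => U (m w)); repeat split; auto.
Qed.

End PCx.
Import PCx.

Module PU.

Definition Rsup (E : R -> Prop) : R :=
  proj1_sig (constructive_indefinite_description
    (fun m => (bound E /\ exists x, E x) -> is_lub E m)
    (match classic (bound E /\ exists x, E x) with
     | or_introl h => let (m, Hm) := completeness E (proj1 h) (proj2 h) in
                      ex_intro _ m (fun _ => Hm)
     | or_intror h => ex_intro _ 0 (fun h' => False_ind _ (h h'))
     end)).

Lemma Rsup_spec E b : (forall r, E r -> r <= b) -> (exists x, E x) -> is_lub E (Rsup E).
Proof.
  intros hb hn. unfold Rsup. destruct (constructive_indefinite_description _ _) as [m Hm]; simpl.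
  apply Hm; split; auto. exists b; intros r Er; auto.
Qed.

Lemma Rsup_ub E b r : (forall r, E r -> r <= b) -> E r -> r <= Rsup E.
Proof. intros hb Er. apply (Rsup_spec E b hb (ex_intro _ r Er)); auto. Qed.

Lemma Rsup_least E b : (exists x, E x) -> (forall r, E r -> r <= b) -> Rsup E <= b.
Proof. intros hn hb. apply (Rsup_spec E b hb hn). intros r Er; auto. Qed.

Lemma Rsup_approx E b eps : (exists x, E x) -> (forall r, E r -> r <= b) -> 0 < eps ->
  exists r, E r /\ Rsup E - eps < r.
Proof.
  intros hn hb he. apply NNPP; intros H.
  assert (Rsup E <= Rsup E - eps); [|lra].
  apply Rsup_least; auto. intros r Er. apply Rnot_lt_le. intros h; apply H; eauto.
Qed.

Lemma nat_floor z : 0 <= z -> exists k : nat, INR k <= z < INR k + 1.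
Proof.
  intros hz. destruct (archimed z) as [h1 h2].
  assert (hm : (0 < up z)%Z) by (apply lt_0_IZR; lra).
  exists (Z.to_nat (up z - 1)). rewrite INR_IZR_INZ, Z2Nat.id by lia.
  rewrite minus_IZR. simpl. lra.
Qed.

Lemma nat_lt_pow2 n : (n < 2 ^ n)%nat.
Proof. induction n; simpl; lia. Qed.

Lemma pow2_pos n : 0 < INR (2 ^ n).
Proof. apply lt_0_INR. pose proof (nat_lt_pow2 n); lia. Qed.

Lemma exists_big_pow eps c : 0 < eps -> exists n, c < INR (2 ^ n) * eps.
Proof.
  intros he. destruct (nat_floor (Rmax 0 (c / eps))) as [k [hk1 hk2]]; [apply Rmax_l|].
  exists (S k). pose proof (nat_lt_pow2 (S k)). apply lt_INR in H. rewrite S_INR in H.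
  assert (c / eps < INR (2 ^ S k)) by (pose proof (Rmax_r 0 (c/eps)); lra).
  apply (Rmult_lt_compat_r eps) in H0; auto. unfold Rdiv in H0.
  rewrite Rmult_assoc, Rinv_l in H0 by lra. lra.
Qed.

Definition dy (n k : nat) : R := INR k / INR (2 ^ n).

Lemma dy_ge0 n k : 0 <= dy n k.
Proof. unfold dy. apply Rle_mult_inv_pos; [apply pos_INR| apply pow2_pos]. Qed.

Lemma dy_le1 n k : (k <= 2 ^ n)%nat -> dy n k <= 1.
Proof.
  intros h. unfold dy. pose proof (pow2_pos n). apply le_INR in h.
  apply (Rmult_le_reg_r (INR (2^n))); auto. unfold Rdiv; rewrite Rmult_assoc, Rinv_l by lra. lra.
Qed.

Lemma dy_lt_nat m j n k : dy m j < dy n k -> (j * 2 ^ n < k * 2 ^ m)%nat.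
Proof.
  unfold dy. intros h. pose proof (pow2_pos m); pose proof (pow2_pos n).
  apply INR_lt. rewrite !mult_INR.
  apply (Rmult_lt_compat_r (INR (2^m) * INR (2^n))) in h; [|nra].
  replace (INR j / INR (2 ^ m) * (INR (2 ^ m) * INR (2 ^ n))) with (INR j * INR (2^n)) in h by (field; lra).
  replace (INR k / INR (2 ^ n) * (INR (2 ^ m) * INR (2 ^ n))) with (INR k * INR (2^m)) in h by (field; lra).
  auto.
Qed.

Section Ury.
Variable X : TopSpace.
Hypothesis HX : hausdorff X.
Hypothesis LC : locally_compact X.

Lemma shrink_pt (U : X -> Prop) x : open U -> U x ->
  exists N L, open N /\ tcompact L /\ N x /\ (forall y, N y -> L y) /\ (forall y, L y -> U y).
Proof.
  intros oU Ux. destruct (LC x) as [W [C [oW [Wx [WC cC]]]]].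
  set (D := fun y => C y /\ ~ U y).
  assert (cD : tcompact D).
  { apply (compact_closed_sub C); auto; [|intros y [h _]; auto].
    apply (open_ext (fun y => (~ C y) \/ U y)).
    - intros y; unfold D; split; [intros [h|h] [h1 h2]; auto| intros h; destruct (classic (C y)); [right; apply NNPP; intros h'; apply h; auto| left; auto]].
    - apply (open_ext (fun y => exists V, (V = (fun y => ~ C y) \/ V = U) /\ V y)).
      + intros y; split; [intros [V [[->| ->] h]]; auto| intros [h|h]; [exists (fun y => ~ C y)| exists U]; split; auto].
      + apply open_union. intros V [->| ->]; auto. apply compact_closed; auto. }
  assert (nDx : ~ D x) by (intros [_ h]; auto).
  destruct (sep_point_compact HX D x cD nDx) as [A [B [oA [oB [Ax [DB dis]]]]]].
  exists (fun y => W y /\ A y), (fun y => C y /\ ~ B y). split; [|split; [|split; [|split]]].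
  - apply open_inter; auto.
  - apply (compact_closed_sub C); auto; [|intros y [h _]; auto].
    apply (open_ext (fun y => exists V, (V = (fun y => ~ C y) \/ V = B) /\ V y)).
    + intros y; split.
      * intros [V [[->| ->] h]]; intros [h1 h2]; auto.
      * intros h. destruct (classic (C y)) as [Cy|nCy]; [|exists (fun y => ~ C y); split; auto].
        exists B; split; auto. apply NNPP; intros h'; apply h; auto.
    + apply open_union. intros V [->| ->]; auto. apply compact_closed; auto.
  - split; auto.
  - intros y [Wy Ay]; split; auto. intros By. apply (dis y); auto.
  - intros y [Cy nBy]. apply NNPP; intros nUy. apply nBy, DB. split; auto.
Qed.

Lemma shrink (K U : X -> Prop) : tcompact K -> open U -> (forall x, K x -> U x) ->
  exists V L, open V /\ tcompact L /\ (forall x, K x -> V x) /\ (forall x, V x -> L x) /\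
    (forall x, L x -> U x).
Proof.
  intros cK oU KU.
  assert (H : forall k : {k | K k}, exists NL : (X -> Prop) * (X -> Prop),
    open (fst NL) /\ tcompact (snd NL) /\ fst NL (proj1_sig k) /\ (forall y, fst NL y -> snd NL y) /\
    (forall y, snd NL y -> U y)).
  { intros [k Kk]. destruct (shrink_pt U k oU (KU k Kk)) as [N [L h]]. exists (N, L); simpl; tauto. }
  destruct (choice _ H) as [g Hg].
  destruct (cK {k | K k} (fun k => fst (g k))) as [l Hl].
  - intros k; apply Hg.
  - intros x Kx; exists (exist _ x Kx); apply Hg.
  - exists (fun z => exists k, In k l /\ fst (g k) z), (fun z => exists k, In k l /\ snd (g k) z).
    repeat split.
    + apply open_funion; intros; apply Hg.
    + apply compact_funion; intros; apply Hg.
    + intros x Kx; apply Hl; auto.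
    + intros x [k [Hk h]]; exists k; split; auto; apply Hg; auto.
    + intros x [k [Hk h]]; apply (Hg k); auto.
Qed.

Definition Pair := ((X -> Prop) * (X -> Prop))%type.
Definition good (p : Pair) := open (fst p) /\ tcompact (snd p) /\ forall x, fst p x -> snd p x.

Lemma sh_ex (A B : X -> Prop) : exists p : Pair, good p /\
  ((tcompact A /\ open B /\ forall x, A x -> B x) -> (forall x, A x -> fst p x) /\ (forall x, snd p x -> B x)).
Proof.
  destruct (classic (tcompact A /\ open B /\ forall x, A x -> B x)) as [[h1 [h2 h3]]|h].
  - destruct (shrink A B h1 h2 h3) as [V [L h]]. exists (V, L); unfold good; simpl; tauto.
  - exists ((fun _ => False), (fun _ => False)); unfold good; simpl; repeat split; try tauto.
    apply open_empty. apply compact_empty.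
Qed.

Definition sh A B : Pair := proj1_sig (constructive_indefinite_description _ (sh_ex A B)).

Lemma sh_good A B : good (sh A B).
Proof. unfold sh; destruct (constructive_indefinite_description _ _) as [p Hp]; apply Hp. Qed.
Lemma sh_spec A B : tcompact A -> open B -> (forall x, A x -> B x) ->
  (forall x, A x -> fst (sh A B) x) /\ (forall x, snd (sh A B) x -> B x).
Proof. intros; unfold sh; destruct (constructive_indefinite_description _ _) as [p Hp]; apply Hp; auto. Qed.

Variables K U : X -> Prop.
Hypothesis cK : tcompact K.
Hypothesis oU : open U.
Hypothesis KU : forall x, K x -> U x.

Definition P1 := sh K U.
Definition P0 := sh K (fst P1).

Lemma P1_spec : (forall x, K x -> fst P1 x) /\ (forall x, snd P1 x -> U x).
Proof. apply sh_spec; auto. Qed.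
Lemma P0_spec : (forall x, K x -> fst P0 x) /\ (forall x, snd P0 x -> fst P1 x).
Proof. apply sh_spec; auto. apply sh_good. apply P1_spec. Qed.

Fixpoint W (n k : nat) : Pair :=
  match n with
  | O => if Nat.eqb k 0 then P0 else P1
  | S n => if Nat.even k then W n (Nat.div2 k)
           else sh (snd (W n (Nat.div2 k))) (fst (W n (S (Nat.div2 k))))
  end.

Lemma W_good n k : good (W n k).
Proof.
  revert k; induction n; intros k; simpl.
  - destruct (Nat.eqb k 0); apply sh_good.
  - destruct (Nat.even k); auto. apply sh_good.
Qed.

Lemma W_even q i : W (S q) (2 * i) = W q i.
Proof. cbn -[Nat.even Nat.div2 Nat.mul]. rewrite Nat.even_even, Nat.div2_double. auto. Qed.

Lemma W_odd q i : W (S q) (S (2 * i)) = sh (snd (W q i)) (fst (W q (S i))).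
Proof. cbn -[Nat.even Nat.div2 Nat.mul]. rewrite Nat.even_succ, Nat.div2_succ_double.
  replace (Nat.odd (2 * i)) with false; auto.
  unfold Nat.odd; rewrite Nat.even_even; auto. Qed.

Lemma W_cons n k : (k < 2 ^ n)%nat -> forall x, snd (W n k) x -> fst (W n (S k)) x.
Proof.
  revert k; induction n; intros k hk.
  - simpl in hk. assert (k = 0)%nat by lia. subst. simpl. apply P0_spec.
  - destruct (Nat.Even_or_Odd k) as [[i ->]|[i ->]].
    + rewrite W_even, W_odd. assert (i < 2 ^ n)%nat by (simpl in hk; lia).
      apply sh_spec; [apply W_good|apply W_good|apply IHn; auto].
    + replace (2 * i + 1)%nat with (S (2 * i)) by lia.
      replace (S (S (2 * i))) with (2 * S i)%nat by lia.
      rewrite W_even, W_odd. assert (i < 2 ^ n)%nat by (simpl in hk; lia).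
      apply sh_spec; [apply W_good|apply W_good|apply IHn; auto].
Qed.

Lemma W_lift n p k : W (n + p) (k * 2 ^ p) = W n k.
Proof.
  induction p.
  - rewrite Nat.add_0_r, Nat.pow_0_r, Nat.mul_1_r; auto.
  - rewrite Nat.add_succ_r, Nat.pow_succ_r'.
    replace (k * (2 * 2 ^ p))%nat with (2 * (k * 2 ^ p))%nat by lia.
    rewrite W_even; auto.
Qed.

Lemma W_chain n i j : (i < j)%nat -> (j <= 2 ^ n)%nat -> forall x, snd (W n i) x -> fst (W n j) x.
Proof.
  induction j; intros hij hj; [lia|].
  destruct (Nat.eq_dec i j) as [->|hne].
  - apply W_cons; lia.
  - intros x hx. apply W_cons; [lia|]. apply (W_good n j). apply IHj; auto; lia.
Qed.

Lemma W_order m j n k : (j <= 2 ^ m)%nat -> (k <= 2 ^ n)%nat -> dy m j < dy n k ->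
  forall x, snd (W m j) x -> fst (W n k) x.
Proof.
  intros hj hk hd. apply dy_lt_nat in hd.
  rewrite <- (W_lift m n j), <- (W_lift n m k), (Nat.add_comm n m).
  apply W_chain; auto. rewrite Nat.pow_add_r, (Nat.mul_comm (2^m)). apply Nat.mul_le_mono_r; auto.
Qed.

Lemma W_top n : W n (2 ^ n) = P1.
Proof. pose proof (W_lift 0 n 1) as h. rewrite Nat.add_0_l, Nat.mul_1_l in h. rewrite h. reflexivity. Qed.

Definition E x r := r = 0 \/ exists n k, (k <= 2 ^ n)%nat /\ fst (W n k) x /\ r = 1 - dy n k.

Lemma E_le1 x r : E x r -> r <= 1.
Proof. intros [->|[n [k [_ [_ ->]]]]]; [lra| pose proof (dy_ge0 n k); lra]. Qed.

Definition g x := Rsup (E x).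

Lemma E_ne x : exists r, E x r.
Proof. exists 0; left; auto. Qed.

Lemma g_ge r x : E x r -> r <= g x.
Proof. intros h; apply (Rsup_ub _ 1); auto. apply E_le1. Qed.

Lemma g_range x : 0 <= g x <= 1.
Proof. split; [apply g_ge; left; auto| apply Rsup_least; [apply E_ne| apply E_le1]]. Qed.

Lemma g_K x : K x -> g x = 1.
Proof.
  intros Kx. apply Rle_antisym; [apply g_range|]. apply g_ge. right. exists 0%nat, 0%nat.
  repeat split; [simpl; lia| simpl; apply P0_spec; auto| unfold dy; simpl; lra].
Qed.

Lemma E_upper n k y : (k <= 2 ^ n)%nat -> ~ snd (W n k) y -> forall r, E y r -> r <= 1 - dy n k.
Proof.
  intros hk hy r [->|[m [j [hj [hW ->]]]]].
  - pose proof (dy_le1 n k hk); lra.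
  - destruct (Rlt_dec (dy m j) (dy n k)) as [hl|hl]; [|lra].
    exfalso; apply hy. apply (W_good n k). apply (W_order m j n k); auto. apply (W_good m j); auto.
Qed.

Lemma g_out x : ~ snd P1 x -> g x = 0.
Proof.
  intros hx. apply Rle_antisym; [|apply g_range].
  apply Rsup_least; [apply E_ne|]. intros r Er.
  pose proof (E_upper 0 1 x (le_n _) hx r Er). unfold dy in H; simpl in H. lra.
Qed.

Lemma g_cont : rcont g.
Proof.
  intros x eps he.
  assert (HL : exists U1, open U1 /\ U1 x /\ forall y, U1 y -> g x - eps < g y).
  { destruct (Rlt_dec (g x) eps) as [hlt|hge].
    - exists (fun _ => True); repeat split; [apply open_full|]. intros y _; pose proof (g_range y); lra.
    - destruct (Rsup_approx (E x) 1 eps (E_ne x) (E_le1 x) he) as [r [Er hr]].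
      fold (g x) in hr.
      destruct Er as [->|[n [k [hk [hW ->]]]]]; [lra|].
      exists (fst (W n k)); repeat split; auto; [apply W_good|].
      intros y hy. eapply Rlt_le_trans; [apply hr|]. apply g_ge. right; exists n, k; auto. }
  assert (HU : exists U2, open U2 /\ U2 x /\ forall y, U2 y -> g y < g x + eps).
  { destruct (Rlt_dec 1 (g x + eps)) as [hlt|hge].
    - exists (fun _ => True); repeat split; [apply open_full|]. intros y _; pose proof (g_range y); lra.
    - set (a := 1 - g x). assert (ha : eps <= a) by (unfold a; lra).
      destruct (exists_big_pow eps 3 he) as [n hn].
      pose proof (pow2_pos n) as hp.
      destruct (nat_floor (a * INR (2 ^ n))) as [k0 [hk1 hk2]]; [pose proof (g_range x); unfold a; nra|].
      assert (hk0 : (3 <= k0)%nat).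
      { assert (2 < INR k0) by nra. destruct (le_lt_dec 3 k0); auto.
        assert (INR k0 <= INR 2) by (apply le_INR; lia). simpl in H0. lra. }
      set (k := (k0 - 2)%nat).
      assert (hkR : INR k = INR k0 - 2) by (unfold k; rewrite minus_INR by lia; simpl; lra).
      assert (hk1R : INR (S k) = INR k0 - 1) by (rewrite S_INR; lra).
      assert (d1 : dy n (S k) < a).
      { unfold dy. rewrite hk1R. apply (Rmult_lt_reg_r (INR (2^n))); auto.
        unfold Rdiv; rewrite Rmult_assoc, Rinv_l by lra. lra. }
      assert (d2 : a - eps < dy n k).
      { unfold dy. rewrite hkR. apply (Rmult_lt_reg_r (INR (2^n))); auto.
        unfold Rdiv; rewrite Rmult_assoc, Rinv_l by lra. nra. }
      assert (hSk : (S k <= 2 ^ n)%nat).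
      { apply INR_le. rewrite hk1R. pose proof (g_range x). unfold a in *. nra. }
      assert (nx : ~ snd (W n k) x).
      { intros hx. apply W_cons in hx; [|lia].
        assert (1 - dy n (S k) <= g x) by (apply g_ge; right; exists n, (S k); auto).
        unfold a in d1; lra. }
      exists (fun y => ~ snd (W n k) y); repeat split; auto.
      + apply compact_closed; auto; apply W_good.
      + intros y hy. assert (g y <= 1 - dy n k).
        { apply Rsup_least; [apply E_ne|]. apply E_upper; auto; lia. }
        unfold a in d2; lra. }
  destruct HL as [U1 [oU1 [U1x H1]]]; destruct HU as [U2 [oU2 [U2x H2]]].
  exists (fun y => U1 y /\ U2 y); repeat split; auto; [apply open_inter; auto|].
  intros y [h1 h2]. specialize (H1 y h1); specialize (H2 y h2). apply Rabs_def1; lra.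
Qed.

End Ury.

Lemma urysohn (X : TopSpace) (K U : X -> Prop) : hausdorff X -> locally_compact X ->
  tcompact K -> open U -> (forall x, K x -> U x) ->
  exists g : X -> R, rcont g /\ (forall x, 0 <= g x <= 1) /\ (forall x, K x -> g x = 1) /\
    exists L, tcompact L /\ (forall x, L x -> U x) /\ (forall x, ~ L x -> g x = 0).
Proof.
  intros HX LC cK oU KU. exists (g X HX LC K U).
  split; [apply g_cont; auto|]. split; [apply g_range|]. split; [intros; apply g_K; auto|].
  exists (snd (P1 X HX LC K U)). split; [apply (sh_good X HX LC)|]. split.
  - apply P1_spec; auto.
  - intros; apply g_out; auto.
Qed.

End PU.
Import PU.

Module PF.

Lemma act_cont_pt (G : TopGroup) (X : TopSpace) (act : G -> X -> X) :
  continuous_action G X act -> forall (u : G -> G) (x : X), tcontinuous u ->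
  tcontinuous (fun s => act (u s) x).
Proof.
  intros [_ [_ ca]] u x cu. apply (cont2_comp act u (fun _ => x)); auto. apply cont_const.
Qed.

Lemma act_cont_x (G : TopGroup) (X : TopSpace) (act : G -> X -> X) :
  continuous_action G X act -> forall s : G, tcontinuous (fun x => act s x).
Proof.
  intros [_ [_ ca]] s. apply (cont2_comp act (fun _ => s) (fun x => x)); auto; [apply cont_const|apply cont_id].
Qed.

Lemma forward (G : TopGroup) (X : TopSpace) (act : G -> X -> X) :
  hausdorff G -> locally_compact G -> hausdorff X -> locally_compact X ->
  continuous_action G X act -> slice_proper G X act ->
  forall (x : X) (K : X -> Prop), tcompact K -> tcompact (fun s : G => K (act s x)).
Proof.
  intros HG LG HX LX ca sp x K cK.
  destruct (urysohn X K (fun _ => True) HX LX cK (open_full X) (fun _ _ => I))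
    as [g [gc [gr [gK [L [cL [_ gL]]]]]]].
  set (f := fun y => (g y, 0) : Defs.C).
  assert (fC0 : in_C0 f).
  { split.
    - intros y. apply cc_of_rc; simpl; [apply gc| apply rc_const].
    - intros eps he. exists L; split; auto. intros y hy. unfold f. rewrite Cnorm_real, gL, Rabs_R0; auto. }
  assert (wd : in_C0_dual (fun h : X -> Defs.C => h x)).
  { split; [intros; reflexivity|]. exists 1. intros h c _ hc. specialize (hc x). lra. }
  destruct (sp _ f wd fC0) as [_ van].
  destruct (van (1/2)) as [L' [cL' hL']]; [lra|].
  set (Cs := fun s => K (act (ginv G s) x)).
  assert (cC : tcompact Cs).
  { apply (compact_closed_sub L'); auto.
    - apply (act_cont_pt G X act ca (ginv G) x (cont_ginv G) (fun y => ~ K y)).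
      apply compact_closed; auto.
    - intros s Cs_s. apply NNPP; intros nL. specialize (hL' s nL).
      unfold alpha, f in hL'. rewrite Cnorm_real, gK in hL' by auto. rewrite Rabs_R1 in hL'. lra. }
  apply (compact_image (ginv G) Cs).
  - apply cont_ginv.
  - exact cC.
  - intros s hs. exact hs.
  - intros y hy. exists (ginv G y); split; [unfold Cs; rewrite ginvK; auto| apply ginvK].
Qed.

End PF.
Import PF.

Module PH.

Section C0.
Variable X : TopSpace.

Definition z0 : X -> Defs.C := fun _ => C0c.

Lemma Cnorm_C0c : Cnorm C0c = 0.
Proof. unfold C0c; rewrite Cnorm_real, Rabs_R0; auto. Qed.

Lemma in_C0_ext (f g : X -> Defs.C) : (forall x, f x = g x) -> in_C0 g -> in_C0 f.
Proof. intros H h. replace f with g; auto. apply functional_extensionality; intros; auto. Qed.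

Lemma in_C0_z0 : in_C0 z0.
Proof.
  split.
  - intros x. refine (cc_of_rc _ x _ _); apply (rc_ext _ (fun _ => 0)); try (intros; reflexivity); apply rc_const.
  - intros eps he; exists (fun _ => False); split; [apply compact_empty|]. intros; unfold z0; rewrite Cnorm_C0c; auto.
Qed.

Lemma in_C0_lin (a : Defs.C) (f g : X -> Defs.C) : in_C0 f -> in_C0 g ->
  in_C0 (fun x => Cadd (Cmul a (f x)) (g x)).
Proof.
  intros [cf vf] [cg vg]. split.
  - intros x. refine (cc_of_rc _ x _ _).
    + apply (rc_ext _ (fun y => fst a * fst (f y) - snd a * snd (f y) + fst (g y))); [intros; reflexivity|].
      apply rc_plus; [apply rc_minus; apply rc_mult|]; try apply rc_const;
        [exact (cc_fst f x (cf x))| exact (cc_snd f x (cf x))| exact (cc_fst g x (cg x))].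
    + apply (rc_ext _ (fun y => fst a * snd (f y) + snd a * fst (f y) + snd (g y))); [intros; reflexivity|].
      apply rc_plus; [apply rc_plus; apply rc_mult|]; try apply rc_const;
        [exact (cc_snd f x (cf x))| exact (cc_fst f x (cf x))| exact (cc_snd g x (cg x))].
  - intros eps he. pose proof (Cnorm_ge0 a).
    destruct (vf (eps / 2 / (Cnorm a + 1))) as [K1 [cK1 h1]]; [apply Rdiv_lt_0_compat; lra|].
    destruct (vg (eps / 2)) as [K2 [cK2 h2]]; [lra|].
    exists (fun x => K1 x \/ K2 x); split; [apply compact_union; auto|].
    intros x hx. eapply Rle_lt_trans; [apply Cnorm_triang|]. rewrite Cnorm_mul.
    assert (hf : Cnorm (f x) < eps / 2 / (Cnorm a + 1)) by (apply h1; tauto).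
    assert (hg : Cnorm (g x) < eps / 2) by (apply h2; tauto).
    assert (Cnorm a * Cnorm (f x) <= eps / 2).
    { assert (Cnorm (f x) * (Cnorm a + 1) < eps / 2).
      { apply (Rmult_lt_compat_r (Cnorm a + 1)) in hf; [|lra].
        replace (eps / 2 / (Cnorm a + 1) * (Cnorm a + 1)) with (eps/2) in hf by (field; lra). lra. }
      pose proof (Cnorm_ge0 (f x)). nra. }
    lra.
Qed.

Lemma in_C0_scale (a : Defs.C) (f : X -> Defs.C) : in_C0 f -> in_C0 (fun x => Cmul a (f x)).
Proof.
  intros h. apply (in_C0_ext _ (fun x => Cadd (Cmul a (f x)) (z0 x))).
  - intros x; apply Cpair_eq; simpl; ring.
  - apply in_C0_lin; auto; apply in_C0_z0.
Qed.

Lemma in_C0_add (f g : X -> Defs.C) : in_C0 f -> in_C0 g -> in_C0 (fun x => Cadd (f x) (g x)).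
Proof.
  intros h1 h2. apply (in_C0_ext _ (fun x => Cadd (Cmul (1,0) (f x)) (g x))).
  - intros x; apply Cpair_eq; simpl; ring.
  - apply in_C0_lin; auto.
Qed.

Lemma in_C0_bounded (f : X -> Defs.C) : in_C0 f -> exists B, 0 <= B /\ forall x, Cnorm (f x) <= B.
Proof.
  intros [cf vf]. destruct (vf 1) as [K [cK hK]]; [lra|].
  assert (H : forall k : {k | K k}, exists O, open O /\ O (proj1_sig k) /\
     forall y, O y -> Cnorm (Cadd (f y) (Copp (f (proj1_sig k)))) < 1).
  { intros [k Kk]; simpl. apply cf; lra. }
  destruct (choice _ H) as [O HO].
  destruct (cK _ O) as [l Hl]; [intros; apply HO| intros x Kx; exists (exist _ x Kx); apply HO|].
  set (S := fold_right (fun k acc => Cnorm (f (proj1_sig k)) + acc) 0 l).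
  assert (Spos : forall l' : list {k | K k}, 0 <= fold_right (fun k acc => Cnorm (f (proj1_sig k)) + acc) 0 l').
  { induction l'; simpl; [lra| pose proof (Cnorm_ge0 (f (proj1_sig a))); lra]. }
  assert (Sge : forall (l' : list {k | K k}) k, In k l' -> Cnorm (f (proj1_sig k)) <= fold_right (fun k acc => Cnorm (f (proj1_sig k)) + acc) 0 l').
  { induction l'; intros k hk; [destruct hk|]. destruct hk as [->|hk]; simpl.
    - pose proof (Spos l'); lra.
    - pose proof (IHl' k hk); pose proof (Cnorm_ge0 (f (proj1_sig a))); lra. }
  exists (S + 1). split; [pose proof (Spos l); unfold S; lra|].
  intros x. destruct (classic (K x)) as [Kx|nKx].
  - destruct (Hl x Kx) as [k [hk Ok]]. pose proof (proj2 (proj2 (HO k)) x Ok).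
    pose proof (Cnorm_dist (f x) (f (proj1_sig k))). unfold Cdist in H1.
    pose proof (Sge l k hk). pose proof (Rle_abs (Cnorm (f x) - Cnorm (f (proj1_sig k)))). unfold S; lra.
  - pose proof (hK x nKx). pose proof (Spos l). unfold S; lra.
Qed.

Variable w : (X -> Defs.C) -> Defs.C.
Hypothesis hw : in_C0_dual w.

Lemma w_bnd : exists M, 0 < M /\ forall f c, in_C0 f -> 0 <= c -> (forall x, Cnorm (f x) <= c) ->
  Cnorm (w f) <= M * c.
Proof.
  destruct hw as [_ [M hM]]. exists (Rabs M + 1). split; [pose proof (Rabs_pos M); lra|].
  intros f c hf hc hb. eapply Rle_trans; [apply (hM f c hf hb)|].
  pose proof (Rle_abs M). nra.
Qed.

Lemma w_z0 : w z0 = C0c.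
Proof.
  destruct w_bnd as [M [hM hb]]. apply Cnorm_eq0.
  pose proof (hb z0 0 in_C0_z0 (Rle_refl 0)). rewrite Rmult_0_r in H. apply H.
  intros; unfold z0; rewrite Cnorm_C0c; lra.
Qed.

Lemma w_scale (a : Defs.C) (f : X -> Defs.C) : in_C0 f -> w (fun x => Cmul a (f x)) = Cmul a (w f).
Proof.
  intros h. transitivity (w (fun x => Cadd (Cmul a (f x)) (z0 x))).
  - f_equal; apply functional_extensionality; intros x; apply Cpair_eq; simpl; ring.
  - rewrite (proj1 hw a f z0 h in_C0_z0), w_z0. apply Cpair_eq; simpl; ring.
Qed.

Lemma w_add (f g : X -> Defs.C) : in_C0 f -> in_C0 g -> w (fun x => Cadd (f x) (g x)) = Cadd (w f) (w g).
Proof.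
  intros h1 h2. transitivity (w (fun x => Cadd (Cmul (1,0) (f x)) (g x))).
  - f_equal; apply functional_extensionality; intros x; apply Cpair_eq; simpl; ring.
  - rewrite (proj1 hw (1,0) f g h1 h2). apply Cpair_eq; simpl; ring.
Qed.

Lemma w_sub (f g : X -> Defs.C) : in_C0 f -> in_C0 g -> w (fun x => Cadd (f x) (Copp (g x))) = Cadd (w f) (Copp (w g)).
Proof.
  intros h1 h2. transitivity (w (fun x => Cadd (Cmul (-1,0) (g x)) (f x))).
  - f_equal; apply functional_extensionality; intros x; apply Cpair_eq; simpl; ring.
  - rewrite (proj1 hw (-1,0) g f h2 h1). apply Cpair_eq; simpl; ring.
Qed.

Lemma rotate (g : X -> Defs.C) : in_C0 g -> exists u, Cnorm u = 1 /\ fst (w (fun x => Cmul u (g x))) = Cnorm (w g).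
Proof.
  intros h. destruct (Req_dec (Cnorm (w g)) 0) as [h0|h0].
  - exists (1, 0). split; [rewrite Cnorm_real, Rabs_R1; auto|].
    rewrite w_scale by auto. rewrite h0.
    assert (w g = C0c) by (apply Cnorm_eq0; lra). rewrite H; simpl; ring.
  - set (n := Cnorm (w g)). pose proof (Cnorm_ge0 (w g)).
    exists (fst (w g) / n, - snd (w g) / n). split.
    + pose proof (Cnorm_sq (w g)) as hsq. fold n in hsq.
      unfold Cnorm at 1; simpl.
      replace (fst (w g) / n * (fst (w g) / n) + - snd (w g) / n * (- snd (w g) / n)) with 1.
      * apply sqrt_1.
      * field_simplify; [|unfold n; auto]. replace (fst (w g) ^ 2 + snd (w g) ^ 2) with (n*n) by (rewrite hsq; ring). field. unfold n; auto.
    + rewrite w_scale by auto. simpl.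
      apply Rmult_eq_reg_r with n; [|unfold n; auto].
      pose proof (Cnorm_sq (w g)) as hsq. fold n in hsq. rewrite hsq. field. unfold n; auto.
Qed.

End C0.
Arguments z0 {X}. Arguments in_C0_ext {X}. Arguments in_C0_z0 {X}. Arguments in_C0_lin {X}.
Arguments in_C0_scale {X}. Arguments in_C0_add {X}. Arguments in_C0_bounded {X}.
Arguments w_bnd {X}. Arguments w_z0 {X}. Arguments w_scale {X}. Arguments w_add {X}.
Arguments w_sub {X}. Arguments rotate {X}.

End PH.
Import PH.

Module PAct.

Section Act.
Variables (G : TopGroup) (X : TopSpace) (act : G -> X -> X).
Hypothesis ca : continuous_action G X act.

Lemma act_mul s t x : act (gmul G s t) x = act s (act t x).
Proof. apply (proj1 (proj2 ca)). Qed.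
Lemma act_one x : act (gone G) x = x.
Proof. apply (proj1 ca). Qed.
Lemma act_inv_l s x : act (ginv G s) (act s x) = x.
Proof. rewrite <- act_mul, gmulVl, act_one; auto. Qed.
Lemma act_inv_r s x : act s (act (ginv G s) x) = x.
Proof. rewrite <- act_mul, gmulVr, act_one; auto. Qed.

Lemma alpha_C0 (f : X -> Defs.C) s : in_C0 f -> in_C0 (fun x => f (act (ginv G s) x)).
Proof.
  intros [cf vf]. split.
  - intros x. apply (cc_map (fun x => act (ginv G s) x) f x); [apply act_cont_x; auto| exact (cf _)].
  - intros eps he. destruct (vf eps he) as [K [cK hK]].
    exists (fun y => K (act (ginv G s) y)). split.
    + apply (compact_image (fun x => act s x) K); auto.
      * apply act_cont_x; auto.
      * intros x Kx; rewrite act_inv_l; auto.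
      * intros y hy. exists (act (ginv G s) y); split; auto; apply act_inv_r.
    + intros x hx; apply hK; auto.
Qed.

Lemma unif (f : X -> Defs.C) eps : in_C0 f -> 0 < eps ->
  exists N, open N /\ N (gone G) /\ forall r y, N r -> Cdist (f (act r y)) (f y) < eps.
Proof.
  intros [cf vf] he. set (d := eps / 2).
  destruct (vf d) as [K [cK hK]]; [unfold d; lra|].
  assert (H : forall k : {k | K k}, exists AB : (G -> Prop) * (X -> Prop),
    open (fst AB) /\ open (snd AB) /\ fst AB (gone G) /\ snd AB (proj1_sig k) /\
    (forall a b, fst AB a -> snd AB b -> Cdist (f (act a b)) (f (proj1_sig k)) < d) /\
    (forall b, snd AB b -> Cdist (f b) (f (proj1_sig k)) < d)).
  { intros [k Kk]; simpl.
    destruct (cf k d) as [O [oO [Ok HO]]]; [unfold d; lra|].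
    destruct (proj2 (proj2 ca) O oO (gone G) k) as [A [B [oA [oB [Ae [Bk HAB]]]]]].
    { rewrite act_one; auto. }
    exists (A, fun y => B y /\ O y); simpl. repeat split; auto.
    - apply open_inter; auto.
    - intros a b ha [hb _]. apply HO; auto.
    - intros b [_ hb]; apply HO; auto. }
  destruct (choice _ H) as [AB HAB].
  destruct (cK _ (fun k => snd (AB k))) as [l Hl].
  { intros; apply HAB. } { intros x Kx; exists (exist _ x Kx); apply HAB. }
  set (N0 := fun r => forall k, In k l -> fst (AB k) r).
  assert (oN0 : open N0) by (apply open_finter; intros; apply HAB).
  exists (fun r => N0 r /\ N0 (ginv G r)). split; [|split].
  - apply open_inter; auto. apply (cont_ginv G N0 oN0).
  - rewrite ginv1. split; intros k _; apply HAB.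
  - intros r y [h1 h2].
    destruct (classic (K y)) as [Ky|nKy].
    + destruct (Hl y Ky) as [k [hk hy]].
      pose proof (proj1 (proj2 (proj2 (proj2 (proj2 (HAB k))))) r y (h1 k hk) hy).
      pose proof (proj2 (proj2 (proj2 (proj2 (proj2 (HAB k))))) y hy).
      pose proof (Cdist_triang (f (act r y)) (f y) (f (proj1_sig k))).
      rewrite (Cdist_sym (f (proj1_sig k))) in H2. unfold d in *; lra.
    + destruct (classic (K (act r y))) as [Kz|nKz].
      * destruct (Hl _ Kz) as [k [hk hz]].
        pose proof (proj1 (proj2 (proj2 (proj2 (proj2 (HAB k))))) (ginv G r) _ (h2 k hk) hz).
        rewrite act_inv_l in H0.
        pose proof (proj2 (proj2 (proj2 (proj2 (proj2 (HAB k))))) _ hz).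
        pose proof (Cdist_triang (f (act r y)) (f y) (f (proj1_sig k))).
        rewrite (Cdist_sym (f (proj1_sig k))) in H2. unfold d in *; lra.
      * pose proof (hK _ nKy); pose proof (hK _ nKz).
        pose proof (Cdist_le (f (act r y)) (f y)). unfold d in *; lra.
Qed.

Lemma F_cont (w : (X -> Defs.C) -> Defs.C) (f : X -> Defs.C) : in_C0_dual w -> in_C0 f ->
  ccontinuous (fun s : G => w (alpha G X act s f)).
Proof.
  intros hw hf t eps he.
  destruct (w_bnd w hw) as [M [hM hb]].
  destruct (unif f (eps / (2 * M)) hf) as [N [oN [Ne HN]]]; [apply Rdiv_lt_0_compat; lra|].
  exists (fun s => N (gmul G (ginv G s) t)). split; [|split].
  - apply (cont2_comp (gmul G) (ginv G) (fun _ => t)); auto; [apply gmul_cont| apply cont_ginv| apply cont_const].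
  - rewrite gmulVl; auto.
  - intros s hs. unfold alpha.
    rewrite <- (w_sub w hw) by (apply alpha_C0; auto).
    eapply Rle_lt_trans.
    + apply (hb _ (eps / (2 * M))).
      * apply in_C0_add; [apply alpha_C0; auto|]. 
        apply (in_C0_ext (fun x => Copp (f (act (ginv G t) x))) (fun x => Cmul (-1, 0) (f (act (ginv G t) x)))).
        { intros; apply Cpair_eq; simpl; ring. }
        apply in_C0_scale, alpha_C0; auto.
      * left; apply Rdiv_lt_0_compat; lra.
      * intros x. left.
        replace (act (ginv G s) x) with (act (gmul G (ginv G s) t) (act (ginv G t) x)).
        { apply HN; auto. }
        rewrite <- act_mul, <- gmulA, gmulVr, gmul1r; auto.
    + replace (M * (eps / (2 * M))) with (eps / 2) by (field; lra). lra.
Qed.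

End Act.

End PAct.
Import PAct.

Module PD.

Lemma cc_zero {X : TopSpace} (p : X -> Defs.C) (h : X -> R) x :
  (forall y, Cnorm (p y) <= h y) -> rc h x -> h x = 0 -> cc p x.
Proof.
  intros hp ch h0 eps he. destruct (ch eps he) as [U [oU [Ux HU]]].
  exists U; repeat split; auto. intros y Uy. specialize (HU y Uy). rewrite h0, Rminus_0_r in HU.
  eapply Rle_lt_trans; [apply (Cdist_le (p y) (p x))|].
  pose proof (hp y); pose proof (hp x). pose proof (Rle_abs (h y)). lra.
Qed.

Lemma Cnorm_scal q z : Cnorm (Cmul (q, 0) z) = Rabs q * Cnorm z.
Proof. rewrite Cnorm_mul, Cnorm_real; auto. Qed.

Section Part.
Variable X : TopSpace.
Variables h k : X -> R.
Hypothesis ch : rcont h.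
Hypothesis ck : rcont k.
Hypothesis ph : forall x, 0 <= h x.
Hypothesis pk : forall x, 0 <= k x.

Definition q x := match Rlt_dec 0 (h x + k x) with left _ => h x / (h x + k x) | right _ => 0 end.

Lemma q_range x : 0 <= q x <= 1.
Proof.
  unfold q; destruct (Rlt_dec 0 (h x + k x)); [|lra]. specialize (ph x); specialize (pk x).
  split; [apply Rle_mult_inv_pos; lra|]. apply (Rmult_le_reg_r (h x + k x)); auto.
  unfold Rdiv; rewrite Rmult_assoc, Rinv_l by lra. lra.
Qed.

Lemma part_C0 (g : X -> Defs.C) : in_C0 g -> (forall x, Cnorm (g x) <= h x + k x) ->
  in_C0 (fun x => Cmul (q x, 0) (g x)) /\ (forall x, Cnorm (Cmul (q x, 0) (g x)) <= h x).
Proof.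
  intros [cg vg] hg.
  assert (bnd : forall x, Cnorm (Cmul (q x, 0) (g x)) <= h x).
  { intros x. rewrite Cnorm_scal. pose proof (q_range x). rewrite Rabs_right by lra.
    unfold q in *. destruct (Rlt_dec 0 (h x + k x)).
    - specialize (hg x). pose proof (Cnorm_ge0 (g x)).
      apply Rle_trans with (h x / (h x + k x) * (h x + k x)).
      + apply Rmult_le_compat_l; lra.
      + right; field; lra.
    - rewrite Rmult_0_l; auto. }
  assert (bnd2 : forall x, Cnorm (Cmul (q x, 0) (g x)) <= Cnorm (g x)).
  { intros x. rewrite Cnorm_scal. pose proof (q_range x). rewrite Rabs_right by lra.
    pose proof (Cnorm_ge0 (g x)). nra. }
  split; [split|]; auto.
  - intros x. destruct (Rlt_dec 0 (h x + k x)) as [pos|npos].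
    + assert (cs : rcont (fun y => h y + k y)) by (intros y; apply rc_plus; auto).
      assert (oO : open (fun y => 0 < h y + k y)) by (apply open_gt; auto).
      refine (cc_of_rc _ x _ _).
      * apply (rc_local _ (fun y => h y * / (h y + k y) * fst (g y) - 0 * snd (g y)) _ x oO pos).
        { intros y hy. simpl. unfold q. destruct (Rlt_dec 0 (h y + k y)); [|contradiction]. auto. }
        apply rc_minus; apply rc_mult; try apply rc_const; [| exact (cc_fst g x (cg x))| exact (cc_snd g x (cg x))].
        apply rc_mult; auto. apply rc_inv; auto.
      * apply (rc_local _ (fun y => h y * / (h y + k y) * snd (g y) + 0 * fst (g y)) _ x oO pos).
        { intros y hy. simpl. unfold q. destruct (Rlt_dec 0 (h y + k y)); [|contradiction]. auto. }
        apply rc_plus; apply rc_mult; try apply rc_const; [| exact (cc_snd g x (cg x))| exact (cc_fst g x (cg x))].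
        apply rc_mult; auto. apply rc_inv; auto.
    + refine (cc_zero _ h x bnd (ch x) _). specialize (ph x); specialize (pk x); lra.
  - intros eps he. destruct (vg eps he) as [K [cK hK]]. exists K; split; auto.
    intros x nK. eapply Rle_lt_trans; [apply bnd2| auto].
Qed.
End Part.

Section Rho.
Variable X : TopSpace.
Variable w : (X -> Defs.C) -> Defs.C.
Hypothesis hw : in_C0_dual w.
Variable M : R.
Hypothesis hM : 0 < M.
Hypothesis hb : forall f c, in_C0 f -> 0 <= c -> (forall x, Cnorm (f x) <= c) -> Cnorm (w f) <= M * c.

Definition Erho (h : X -> R) (r : R) := exists g, in_C0 g /\ (forall x, Cnorm (g x) <= h x) /\ r = fst (w g).
Definition rho h := Rsup (Erho h).
Definition bnd (h : X -> R) := exists c, 0 <= c /\ forall x, 0 <= h x <= c.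

Lemma Erho_ne h : (forall x, 0 <= h x) -> exists r, Erho h r.
Proof.
  intros hp. exists (fst (w z0)). exists z0. split; [apply in_C0_z0|]. split; auto.
  intros x; unfold z0; rewrite Cnorm_C0c; auto.
Qed.

Lemma Erho_bnd h c : 0 <= c -> (forall x, h x <= c) -> forall r, Erho h r -> r <= M * c.
Proof.
  intros hc hhc r [g [hg [hgh ->]]].
  eapply Rle_trans; [apply Rle_abs|]. eapply Rle_trans; [apply Cnorm_fst|].
  apply hb; auto. intros x; eapply Rle_trans; [apply hgh| apply hhc].
Qed.

Lemma rho_ge h g : bnd h -> in_C0 g -> (forall x, Cnorm (g x) <= h x) -> fst (w g) <= rho h.
Proof.
  intros [c [hc hh]] hg hgh. apply (Rsup_ub _ (M * c)).
  - apply Erho_bnd; auto. intros x; apply hh.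
  - exists g; auto.
Qed.

Lemma rho_le h c : (forall x, 0 <= h x) -> 0 <= c -> (forall x, h x <= c) -> rho h <= M * c.
Proof. intros; apply Rsup_least; [apply Erho_ne; auto| apply Erho_bnd; auto]. Qed.

Lemma rho_norm h g : bnd h -> in_C0 g -> (forall x, Cnorm (g x) <= h x) -> Cnorm (w g) <= rho h.
Proof.
  intros bh hg hgh. destruct (rotate w hw g hg) as [u [hu hfst]]. rewrite <- hfst.
  apply rho_ge; auto. apply in_C0_scale; auto.
  intros x; rewrite Cnorm_mul, hu, Rmult_1_l; auto.
Qed.

Lemma rho_ge0 h : bnd h -> 0 <= rho h.
Proof.
  intros bh. replace 0 with (fst (w z0)) by (rewrite (w_z0 w hw); reflexivity).
  apply rho_ge; auto; [apply in_C0_z0|]. destruct bh as [c [_ hh]].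
  intros x; unfold z0; rewrite Cnorm_C0c; apply hh.
Qed.

Lemma rho_mono h1 h2 : (forall x, 0 <= h1 x) -> bnd h2 -> (forall x, h1 x <= h2 x) -> rho h1 <= rho h2.
Proof.
  intros p1 b2 le. apply Rsup_least; [apply Erho_ne; auto|].
  intros r [g [hg [hgh ->]]]. apply rho_ge; auto. intros x; eapply Rle_trans; [apply hgh| apply le].
Qed.

Lemma rho_ext h1 h2 : (forall x, h1 x = h2 x) -> rho h1 = rho h2.
Proof. intros H; f_equal; apply functional_extensionality; auto. Qed.

Lemma bnd_plus h1 h2 : bnd h1 -> bnd h2 -> bnd (fun x => h1 x + h2 x).
Proof.
  intros [c1 [hc1 b1]] [c2 [hc2 b2]]. exists (c1 + c2); split; [lra|].
  intros x; specialize (b1 x); specialize (b2 x); lra.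
Qed.

Lemma rho_super h1 h2 : bnd h1 -> bnd h2 -> rho h1 + rho h2 <= rho (fun x => h1 x + h2 x).
Proof.
  intros b1 b2. pose proof (bnd_plus h1 h2 b1 b2) as b12.
  assert (p1 : forall x, 0 <= h1 x) by (destruct b1 as [c [_ hh]]; intros x; apply hh).
  assert (p2 : forall x, 0 <= h2 x) by (destruct b2 as [c [_ hh]]; intros x; apply hh).
  assert (H : forall g2, in_C0 g2 -> (forall x, Cnorm (g2 x) <= h2 x) ->
     rho h1 <= rho (fun x => h1 x + h2 x) - fst (w g2)).
  { intros g2 hg2 hgh2. apply Rsup_least; [apply Erho_ne; auto|].
    intros r [g1 [hg1 [hgh1 ->]]].
    assert (fst (w (fun x => Cadd (g1 x) (g2 x))) <= rho (fun x => h1 x + h2 x)).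
    { apply rho_ge; auto; [apply in_C0_add; auto|].
      intros x; eapply Rle_trans; [apply Cnorm_triang|]. specialize (hgh1 x); specialize (hgh2 x); lra. }
    rewrite (w_add w hw) in H by auto. simpl in H. lra. }
  assert (rho h2 <= rho (fun x => h1 x + h2 x) - rho h1); [|lra].
  apply Rsup_least; [apply Erho_ne; auto|]. intros r [g2 [hg2 [hgh2 ->]]].
  specialize (H g2 hg2 hgh2). lra.
Qed.

Lemma rho_sub h1 h2 : rcont h1 -> rcont h2 -> bnd h1 -> bnd h2 ->
  rho (fun x => h1 x + h2 x) <= rho h1 + rho h2.
Proof.
  intros c1 c2 b1 b2.
  assert (p1 : forall x, 0 <= h1 x) by (destruct b1 as [c [_ hh]]; intros x; apply hh).
  assert (p2 : forall x, 0 <= h2 x) by (destruct b2 as [c [_ hh]]; intros x; apply hh).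
  apply Rsup_least; [apply Erho_ne; intros x; specialize (p1 x); specialize (p2 x); lra|].
  intros r [g [hg [hgh ->]]].
  destruct (part_C0 X h1 h2 c1 c2 p1 p2 g hg hgh) as [hA bA].
  destruct (part_C0 X h2 h1 c2 c1 p2 p1 g hg) as [hB bB].
  { intros x; specialize (hgh x); lra. }
  set (gA := fun x => Cmul (q X h1 h2 x, 0) (g x)) in *.
  set (gB := fun x => Cmul (q X h2 h1 x, 0) (g x)) in *.
  assert (E : g = fun x => Cadd (gA x) (gB x)).
  { apply functional_extensionality; intros x. unfold gA, gB, q.
    destruct (Rlt_dec 0 (h1 x + h2 x)) as [pa|pa]; destruct (Rlt_dec 0 (h2 x + h1 x)) as [pb|pb]; try lra.
    - apply Cpair_eq; simpl; field; lra.
    - assert (g x = C0c) by (apply Cnorm_eq0; specialize (hgh x); lra).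
      rewrite H; apply Cpair_eq; simpl; ring. }
  rewrite E, (w_add w hw) by auto. simpl.
  pose proof (rho_ge h1 gA b1 hA bA). pose proof (rho_ge h2 gB b2 hB bB). lra.
Qed.

Lemma rho_add h1 h2 : rcont h1 -> rcont h2 -> bnd h1 -> bnd h2 ->
  rho (fun x => h1 x + h2 x) = rho h1 + rho h2.
Proof. intros; apply Rle_antisym; [apply rho_sub| apply rho_super]; auto. Qed.

End Rho.

End PD.
Import PD.

Module PD2.

Lemma in_list_max (l : list nat) n : In n l -> (n <= fold_right Nat.max 0 l)%nat.
Proof. induction l; simpl; [intros []|]. intros [->|h]; [lia| specialize (IHl h); lia]. Qed.

Section WN.
Variable X : TopSpace.
Variable w : (X -> Defs.C) -> Defs.C.
Hypothesis hw : in_C0_dual w.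
Variable M : R.
Hypothesis hM : 0 < M.
Hypothesis hb : forall f c, in_C0 f -> 0 <= c -> (forall x, Cnorm (f x) <= c) -> Cnorm (w f) <= M * c.
Variable gs : nat -> X -> Defs.C.
Hypothesis gC0 : forall n, in_C0 (gs n).
Variable B0 : R.
Hypothesis hB : forall n x, Cnorm (gs n x) <= B0.
Hypothesis pn : forall x d, 0 < d -> exists N, forall k, (N <= k)%nat -> Cnorm (gs k x) < d.
Variable eps : R.
Hypothesis heps : 0 < eps.
Hypothesis big : forall n, eps <= Cnorm (w (gs n)).

Definition Bm := Rmax 0 B0.
Definition hh n x := Cnorm (gs n x).
Definition rh := rho X w.

Lemma hh_cont n : rcont (hh n).
Proof. intros x; exact (cc_norm _ x (proj1 (gC0 n) x)). Qed.
Lemma hh_rng n x : 0 <= hh n x <= Bm.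
Proof. unfold hh, Bm. split; [apply Cnorm_ge0|]. eapply Rle_trans; [apply hB| apply Rmax_r]. Qed.

Fixpoint u n m x := match m with O => hh n x | S m => Rmax (u n m x) (hh (n + S m) x) end.

Lemma u_cont n m : rcont (u n m).
Proof. induction m; intros x; simpl; [apply hh_cont| apply rc_max; [apply IHm| apply hh_cont]]. Qed.

Lemma u_att n m x : exists k, (n <= k <= n + m)%nat /\ u n m x = hh k x.
Proof.
  induction m; simpl.
  - exists n; split; [lia| auto].
  - destruct IHm as [k [hk e]]. unfold Rmax. destruct (Rle_dec (u n m x) (hh (n + S m) x)).
    + exists (n + S m)%nat; split; [lia| auto].
    + exists k; split; [lia| auto].
Qed.

Lemma u_ge n m k x : (n <= k <= n + m)%nat -> hh k x <= u n m x.
Proof.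
  induction m; simpl; intros hk.
  - replace k with n by lia; lra.
  - destruct (Nat.eq_dec k (n + S m)) as [->|ne]; [apply Rmax_r|].
    eapply Rle_trans; [apply IHm; lia| apply Rmax_l].
Qed.

Lemma u_sub n m n' m' x : (n <= n')%nat -> (n' + m' <= n + m)%nat -> u n' m' x <= u n m x.
Proof. intros h1 h2. destruct (u_att n' m' x) as [k [hk ->]]. apply u_ge; lia. Qed.

Lemma u_rng n m x : 0 <= u n m x <= Bm.
Proof. destruct (u_att n m x) as [k [_ ->]]; apply hh_rng. Qed.

Lemma bnd_u n m : bnd X (u n m).
Proof. exists Bm; split; [apply Rmax_l| apply u_rng]. Qed.

Lemma u_van n m d : 0 < d -> exists Q, tcompact Q /\ forall x, ~ Q x -> u n m x < d.
Proof.
  intros hd.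
  assert (H : forall k, exists K, tcompact K /\ forall x, ~ K x -> hh k x < d).
  { intros k; apply (proj2 (gC0 k)); auto. }
  destruct (choice _ H) as [Kf HK].
  exists (fun x => exists k, In k (seq n (S m)) /\ Kf k x). split.
  - apply compact_funion; intros; apply HK.
  - intros x hx. destruct (u_att n m x) as [k [hk ->]]. apply HK. intros hk'.
    apply hx; exists k; split; auto. apply in_seq; lia.
Qed.

Definition a n := Rsup (fun r => exists m, r = rh (u n m)).

Lemma a_ub n : forall r, (exists m, r = rh (u n m)) -> r <= M * Bm.
Proof. intros r [m ->]. unfold rh. apply (rho_le X w M hb); [intros; apply u_rng| apply Rmax_l| intros; apply u_rng]. Qed.

Lemma a_ge n m : rh (u n m) <= a n.
Proof. apply (Rsup_ub _ (M * Bm)); [apply a_ub| eauto]. Qed.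

Definition eta n := eps / INR (2 ^ (n + 2)).
Lemma eta_pos n : 0 < eta n.
Proof. unfold eta; apply Rdiv_lt_0_compat; auto; apply pow2_pos. Qed.

Lemma a_approx n : exists m, a n - eta n < rh (u n m).
Proof.
  destruct (Rsup_approx _ (M * Bm) (eta n) (ex_intro _ _ (ex_intro _ 0%nat eq_refl)) (a_ub n) (eta_pos n))
    as [r [[m ->] h]]. exists m; auto.
Qed.

Definition mf n := proj1_sig (constructive_indefinite_description _ (a_approx n)).
Lemma mf_spec n : a n - eta n < rh (u n (mf n)).
Proof. unfold mf; destruct (constructive_indefinite_description _ _); auto. Qed.

Definition W n := u n (mf n).

Fixpoint v n x := match n with O => W 0 x | S n => Rmin (v n x) (W (S n) x) end.

Lemma v_cont n : rcont (v n).
Proof. induction n; intros x; simpl; [apply u_cont| apply rc_min; [apply IHn| apply u_cont]]. Qed.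

Lemma v_le_W n x : v n x <= W n x.
Proof. destruct n; simpl; [lra| apply Rmin_r]. Qed.

Lemma v_rng n x : 0 <= v n x <= Bm.
Proof.
  induction n; simpl; [apply u_rng|]. unfold Rmin. destruct (Rle_dec _ _); auto. apply u_rng.
Qed.

Lemma bnd_v n : bnd X (v n).
Proof. exists Bm; split; [apply Rmax_l| apply v_rng]. Qed.
Lemma bnd_W n : bnd X (W n).
Proof. apply bnd_u. Qed.

Lemma v_anti n n' x : (n <= n')%nat -> v n' x <= v n x.
Proof.
  induction 1; [lra|]. simpl. eapply Rle_trans; [apply Rmin_l| auto].
Qed.

Fixpoint T n := match n with O => 0 | S n => T n + eta n end.

Lemma T_val n : T n = eps / 2 - eps / INR (2 ^ (n + 1)).
Proof.
  induction n; simpl T.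
  - simpl. field.
  - rewrite IHn. unfold eta. replace (S n + 1)%nat with (n + 2)%nat by lia.
    replace (INR (2 ^ (n + 2))) with (2 * INR (2 ^ (n + 1))).
    + pose proof (pow2_pos (n + 1)). field. lra.
    + replace (n + 2)%nat with (S (n + 1)) by lia. rewrite Nat.pow_succ_r', mult_INR. simpl; lra.
Qed.

Lemma T_lt n : T n < eps / 2.
Proof.
  rewrite T_val. pose proof (pow2_pos (n + 1)). assert (0 < eps / INR (2 ^ (n+1))) by (apply Rdiv_lt_0_compat; lra). lra.
Qed.

Lemma a_big n : eps <= a n.
Proof.
  eapply Rle_trans; [apply (big n)|]. eapply Rle_trans; [|apply (a_ge n 0)].
  unfold rh. apply (rho_norm X w hw M hb); auto.
  - apply bnd_u.
  - intros x; simpl; unfold hh; lra.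
Qed.

Lemma key n : rh (W n) - T n <= rh (v n).
Proof.
  induction n.
  { simpl T. replace (v 0) with (W 0) by (apply functional_extensionality; reflexivity); lra. }
  simpl T.
  replace (v (S n)) with (fun x => Rmin (v n x) (W (S n) x)) by (apply functional_extensionality; reflexivity).
  set (M' := Nat.max (mf n) (S (mf (S n)))).
  assert (hmax : rh (fun x => Rmax (v n x) (W (S n) x)) <= a n).
  { eapply Rle_trans; [|apply (a_ge n M')]. unfold rh. apply (rho_mono X w M hb).
    - intros x; pose proof (v_rng n x); pose proof (u_rng (S n) (mf (S n)) x). unfold W. 
      eapply Rle_trans; [|apply Rmax_l]. lra.
    - apply bnd_u.
    - intros x. apply Rmax_lub.
      + eapply Rle_trans; [apply v_le_W|]. unfold W. apply u_sub; unfold M'; lia.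
      + unfold W. apply u_sub; unfold M'; lia. }
  assert (hadd : rh (fun x => Rmin (v n x) (W (S n) x)) + rh (fun x => Rmax (v n x) (W (S n) x)) =
                 rh (v n) + rh (W (S n))).
  { unfold rh. rewrite <- (rho_add X w hw M hb).
    - rewrite <- (rho_add X w hw M hb).
      + apply rho_ext. intros x. unfold Rmin, Rmax. destruct (Rle_dec _ _); lra.
      + apply v_cont. + apply u_cont. + apply bnd_v. + apply bnd_W.
    - intros x; apply rc_min; [apply v_cont| apply u_cont].
    - intros x; apply rc_max; [apply v_cont| apply u_cont].
    - exists Bm; split; [apply Rmax_l|]. intros x; pose proof (v_rng n x); pose proof (u_rng (S n) (mf (S n)) x).
      unfold W, Rmin; destruct (Rle_dec _ _); lra.
    - exists Bm; split; [apply Rmax_l|]. intros x; pose proof (v_rng n x); pose proof (u_rng (S n) (mf (S n)) x).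
      unfold W, Rmax; destruct (Rle_dec _ _); lra. }
  pose proof (mf_spec n). fold (W n) in H. unfold rh in *. lra.
Qed.

Lemma v_big n : eps / 2 < rh (v n).
Proof.
  pose proof (key n). pose proof (mf_spec n). fold (W n) in H0. pose proof (a_big n).
  pose proof (T_lt (S n)). simpl in H2. lra.
Qed.

Lemma dini d : 0 < d -> exists N, forall x, v N x < d.
Proof.
  intros hd. destruct (u_van 0 (mf 0) d hd) as [Q [cQ hQ]].
  assert (pw : forall x, exists n, v n x < d).
  { intros x. destruct (pn x d hd) as [N hN]. exists N.
    eapply Rle_lt_trans; [apply v_le_W|]. unfold W. destruct (u_att N (mf N) x) as [k [hk ->]].
    apply hN; lia. }
  destruct (cQ nat (fun n x => v n x < d)) as [l hl].
  - intros n; apply open_lt; apply v_cont.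
  - intros x _; apply pw.
  - exists (fold_right Nat.max 0%nat l). intros x. destruct (classic (Q x)) as [qx|nqx].
    + destruct (hl x qx) as [n [hn hv]]. eapply Rle_lt_trans; [apply v_anti, in_list_max; eauto| auto].
    + eapply Rle_lt_trans; [apply (v_anti 0%nat); lia|]. simpl. apply hQ; auto.
Qed.

Lemma wn_false : False.
Proof.
  destruct (dini (eps / (4 * M))) as [N hN]; [apply Rdiv_lt_0_compat; lra|].
  pose proof (v_big N).
  assert (rh (v N) <= M * (eps / (4 * M))).
  { unfold rh; apply (rho_le X w M hb); [intros; apply v_rng| left; apply Rdiv_lt_0_compat; lra| intros; left; auto]. }
  replace (M * (eps / (4 * M))) with (eps / 4) in H0 by (field; lra). lra.
Qed.
End WN.

Lemma weak_null (X : TopSpace) (w : (X -> Defs.C) -> Defs.C) (gs : nat -> X -> Defs.C) B eps :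
  in_C0_dual w -> (forall n, in_C0 (gs n)) -> (forall n x, Cnorm (gs n x) <= B) ->
  (forall x d, 0 < d -> exists N, forall k, (N <= k)%nat -> Cnorm (gs k x) < d) ->
  0 < eps -> (forall n, eps <= Cnorm (w (gs n))) -> False.
Proof.
  intros hw gC hB pn he big. destruct (w_bnd w hw) as [M [hM hb]].
  exact (wn_false X w hw M hM hb gs gC B hB pn eps he big).
Qed.

End PD2.
Import PD2.

Module PMain.

Lemma escape_seq (G : TopGroup) (P : G -> Prop) : locally_compact G ->
  (forall L, tcompact L -> exists s, ~ L s /\ P s) ->
  exists s : nat -> G, (forall n, P (s n)) /\
    forall C, tcompact C -> exists N, forall n, (N <= n)%nat -> ~ C (s n).
Proof.
  intros LG esc.
  destruct (LG (gone G)) as [W0 [Q [oW [We [WQ cQ]]]]].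
  destruct (gmul_cont G W0 oW (ginv G (gone G)) (gone G)) as [A [Bs [oA [oB [Ae [Be HAB]]]]]].
  { rewrite ginv1, gmul1l; auto. }
  set (V := fun a => A (ginv G a) /\ Bs a).
  assert (oV : open V) by (apply open_inter; [apply (cont_ginv G A oA)| auto]).
  assert (HV : forall a b, V a -> V b -> Q (gmul G (ginv G a) b)).
  { intros a b [ha _] [_ hb]. apply WQ, HAB; auto. }
  assert (Hn : forall l : list G, exists s, ~ (exists i, In i l /\ Q (gmul G (ginv G i) s)) /\ P s).
  { intros l. apply esc. apply compact_funion. intros i _.
    apply (compact_image (fun z => gmul G i z) Q); auto.
    - apply cont_lmul.
    - intros z hz. rewrite gmulA, gmulVl, gmul1l; auto.
    - intros y hy. exists (gmul G (ginv G i) y); split; auto. rewrite gmulA, gmulVr, gmul1l; auto. }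
  destruct (choice _ Hn) as [nx Hnx].
  set (lst := nat_rect (fun _ => list G) nil (fun n l => l ++ nx l :: nil)).
  set (s := fun n => nx (lst n)).
  assert (Hin : forall i n, (i < n)%nat -> In (s i) (lst n)).
  { intros i n; induction n; intros h; [lia|].
    change (lst (S n)) with (lst n ++ nx (lst n) :: nil). apply in_or_app.
    destruct (Nat.eq_dec i n) as [->|ne]; [right; left; auto| left; apply IHn; lia]. }
  assert (Hsep : forall i n, (i < n)%nat -> ~ Q (gmul G (ginv G (s i)) (s n))).
  { intros i n h hq. apply (proj1 (Hnx (lst n))). exists (s i); split; auto. }
  exists s; split; [intros n; apply (proj2 (Hnx (lst n)))|].
  intros C cC.
  destruct (cC {c | C c} (fun c z => V (gmul G (ginv G (proj1_sig c)) z))) as [l Hl].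
  - intros c. apply (cont_lmul G (ginv G (proj1_sig c)) V oV).
  - intros z Cz. exists (exist _ z Cz). simpl. rewrite gmulVl. split; auto.
  - assert (Hc : forall c : {c | C c}, exists N, forall n, (N <= n)%nat -> ~ V (gmul G (ginv G (proj1_sig c)) (s n))).
    { intros c. destruct (classic (exists n0, V (gmul G (ginv G (proj1_sig c)) (s n0)))) as [[n0 h0]|hn].
      - exists (S n0). intros n hn hv. apply (Hsep n0 n); [lia|].
        replace (gmul G (ginv G (s n0)) (s n)) with
          (gmul G (ginv G (gmul G (ginv G (proj1_sig c)) (s n0))) (gmul G (ginv G (proj1_sig c)) (s n))).
        + apply HV; auto.
        + rewrite ginv_mul, ginvK. rewrite <- gmulA, (gmulA G (proj1_sig c)), gmulVr, gmul1l; auto.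
      - exists 0%nat. intros n _ hv. apply hn; eauto. }
    destruct (choice _ Hc) as [Nf HNf].
    exists (fold_right Nat.max 0%nat (map Nf l)). intros n hn Cn.
    destruct (Hl (s n) Cn) as [c [hc hv]]. apply (HNf c n); auto.
    assert ((Nf c <= fold_right Nat.max 0%nat (map Nf l))%nat) by (apply in_list_max, in_map; auto). lia.
Qed.

Lemma backward (G : TopGroup) (X : TopSpace) (act : G -> X -> X) :
  locally_compact G -> continuous_action G X act ->
  (forall (x : X) (K : X -> Prop), tcompact K -> tcompact (fun s : G => K (act s x))) ->
  slice_proper G X act.
Proof.
  intros LG ca orb w f hw hf. split; [apply F_cont; auto|].
  intros eps he. apply NNPP; intros hno.
  assert (esc : forall L, tcompact L -> exists s, ~ L s /\ eps <= Cnorm (w (alpha G X act s f))).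
  { intros L cL. apply NNPP; intros h. apply hno. exists L; split; auto. intros s ns.
    apply Rnot_le_lt. intros hle. apply h. exists s; auto. }
  destruct (escape_seq G _ LG esc) as [s [hs hfin]].
  destruct (in_C0_bounded f hf) as [B [_ hB]].
  apply (weak_null X w (fun n => alpha G X act (s n) f) B eps hw).
  - intros n; apply (alpha_C0 G X act ca); auto.
  - intros n x; apply hB.
  - intros x d hd. destruct (proj2 hf d hd) as [K [cK hK]].
    destruct (hfin (fun t => K (act (ginv G t) x))) as [N hN].
    + apply (compact_image (ginv G) (fun t => K (act t x))); auto.
      * apply cont_ginv.
      * intros t ht; rewrite ginvK; auto.
      * intros y hy; exists (ginv G y); split; auto; apply ginvK.
    + exists N; intros k hk. apply hK. apply hN; auto.
  - auto.
  - auto.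
Qed.


End PMain.
Import PMain.

Theorem mainTheorem11 (G : TopGroup) (X : TopSpace) (act : G -> X -> X) :
  hausdorff G -> locally_compact G ->
  hausdorff X -> locally_compact X ->
  continuous_action G X act ->
  (slice_proper G X act <->
   forall (x : X) (K : X -> Prop), tcompact K ->
     tcompact (fun s : G => K (act s x))).
Proof.
  intros HG LG HX LX ca. split.
  - apply forward; auto.
  - apply backward; auto.
Qed.
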